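(* Let $\mathcal{C}$ be a collection of complete, metrically $D$-doubling metric spaces with the following property: for every sequence $(r_k)$ of positive reals and every sequence $(X_k,p_k)$ with $X_k\in\mathcal{C}$ and $p_k\in X_k$ such that $(r_k^{-1}X_k,p_k)$ converges in the pointed Gromov–Hausdorff sense, the limit is connected and has no cut points. Then there is a constant $\lambda\ge1$ such that every element of $\mathcal{C}$ is $\lambda$-annularly linearly connected.
   Context: Metrically $D$-doubling: every ball is covered by at most $D$ balls of half the radius. $r^{-1}X$ denotes $X$ with metric $r^{-1}d$. A cut point of a connected space $Y$ is $y$ with $Y\setminus\{y\}$ disconnected. $\lambda$-annularly linearly connected: for all $p$ and $r\in(0,\mathrm{diam}\,X]$, any two points of $A(p,r,2r)=\{z:r\le d(z,p)\le2r\}$ can be joined by a continuum (compact connected set) in $A(p,r/\lambda,2\lambda r)$. *)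

(* Defs.v *)
From Stdlib Require Import Reals Lra List.
Open Scope R_scope.

Record MetricSpace : Type := {
  carrier :> Type;
  dist : carrier -> carrier -> R;
  dist_nonneg : forall x y, 0 <= dist x y;
  dist_eq0 : forall x y, dist x y = 0 <-> x = y;
  dist_sym : forall x y, dist x y = dist y x;
  dist_tri : forall x y z, dist x z <= dist x y + dist y z
}.

Arguments dist {m} _ _.

(** * Rescaling: r^{-1} X = X with metric r^{-1} d.
    Only meaningful for r > 0; for r <= 0 we use the factor 1 (never used). *)
Definition pos_part1 (r : R) : R := if Rlt_dec 0 r then r else 1.

Lemma pos_part1_pos r : 0 < pos_part1 r.
Proof. unfold pos_part1; destruct (Rlt_dec 0 r); lra. Qed.

Lemma pos_part1_eq r : 0 < r -> pos_part1 r = r.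
Proof. unfold pos_part1; destruct (Rlt_dec 0 r); lra. Qed.

Definition sdist (X : MetricSpace) (r : R) (x y : X) : R := dist x y / pos_part1 r.

Lemma sdist_nonneg X r x y : 0 <= sdist X r x y.
Proof.
  unfold sdist, Rdiv. apply Rmult_le_pos; [apply dist_nonneg|].
  left; apply Rinv_0_lt_compat, pos_part1_pos.
Qed.

Lemma sdist_eq0 X r x y : sdist X r x y = 0 <-> x = y.
Proof.
  unfold sdist. pose proof (pos_part1_pos r). rewrite <- dist_eq0.
  split; intro H0.
  - unfold Rdiv in H0. apply Rmult_integral in H0. destruct H0 as [H0|H0]; auto.
    exfalso. apply (Rinv_neq_0_compat (pos_part1 r)); lra.
  - rewrite H0. unfold Rdiv. ring.
Qed.

Lemma sdist_sym X r x y : sdist X r x y = sdist X r y x.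
Proof. unfold sdist. rewrite dist_sym. reflexivity. Qed.

Lemma sdist_tri X r x y z : sdist X r x z <= sdist X r x y + sdist X r y z.
Proof.
  unfold sdist, Rdiv. rewrite <- Rmult_plus_distr_r.
  apply Rmult_le_compat_r; [left; apply Rinv_0_lt_compat, pos_part1_pos|].
  apply dist_tri.
Qed.

Definition rescale (r : R) (X : MetricSpace) : MetricSpace :=
  {| carrier := carrier X;
     dist := sdist X r;
     dist_nonneg := sdist_nonneg X r;
     dist_eq0 := sdist_eq0 X r;
     dist_sym := sdist_sym X r;
     dist_tri := sdist_tri X r |}.

Section Basic.
Variable X : MetricSpace.

Definition ball (x : X) (r : R) : X -> Prop := fun y => dist x y < r.
Definition cball (x : X) (r : R) : X -> Prop := fun y => dist x y <= r.

Definition cauchy (u : nat -> X) : Prop :=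
  forall eps, 0 < eps -> exists N, forall m n, (N <= m)%nat -> (N <= n)%nat ->
    dist (u m) (u n) < eps.

Definition converges_to (u : nat -> X) (x : X) : Prop :=
  forall eps, 0 < eps -> exists N, forall n, (N <= n)%nat -> dist (u n) x < eps.

Definition complete : Prop :=
  forall u : nat -> X, cauchy u -> exists x, converges_to u x.

Definition doubling (D : nat) : Prop :=
  forall (x : X) (r : R), 0 < r ->
    exists cs : list X, (length cs <= D)%nat /\
      forall y, ball x r y -> exists c, In c cs /\ ball c (r / 2) y.

Definition is_open (U : X -> Prop) : Prop :=
  forall x, U x -> exists e, 0 < e /\ forall y, ball x e y -> U y.

Definition connected_set (S : X -> Prop) : Prop :=
  ~ exists U V : X -> Prop, is_open U /\ is_open V /\
      (forall x, S x -> U x \/ V x) /\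
      (forall x, S x -> U x -> V x -> False) /\
      (exists x, S x /\ U x) /\ (exists x, S x /\ V x).

Definition connected_space : Prop := connected_set (fun _ => True).

Definition cut_point (y : X) : Prop := ~ connected_set (fun z => z <> y).

Definition no_cut_points : Prop := forall y : X, ~ cut_point y.

Definition compact_set (K : X -> Prop) : Prop :=
  forall F : (X -> Prop) -> Prop,
    (forall U, F U -> is_open U) ->
    (forall x, K x -> exists U, F U /\ U x) ->
    exists l : list (X -> Prop), (forall U, In U l -> F U) /\
      (forall x, K x -> exists U, In U l /\ U x).

Definition continuum (K : X -> Prop) : Prop := compact_set K /\ connected_set K.

(** r <= diam X  (diam X in [0, +infinity]) *)
Definition le_diam (r : R) : Prop :=
  forall s, s < r -> exists x y : X, s < dist x y.

Definition annulus (p : X) (a b : R) : X -> Prop :=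
  fun z => a <= dist z p /\ dist z p <= b.

Definition ALC (lam : R) : Prop :=
  forall (p : X) (r : R), 0 < r -> le_diam r ->
    forall x y, annulus p r (2 * r) x -> annulus p r (2 * r) y ->
      exists K : X -> Prop, continuum K /\ K x /\ K y /\
        (forall z, K z -> annulus p (r / lam) (2 * lam * r) z).

End Basic.

Arguments ball {X} _ _ _.
Arguments cball {X} _ _ _.

Definition pGH_converges (Xs : nat -> MetricSpace) (ps : forall k, Xs k)
    (Y : MetricSpace) (q : Y) : Prop :=
  forall R0 eps, 0 < R0 -> 0 < eps ->
    exists N, forall k, (N <= k)%nat ->
      exists f : Xs k -> Y,
        f (ps k) = q /\
        (forall a b, cball (ps k) R0 a -> cball (ps k) R0 b ->
           Rabs (dist (f a) (f b) - dist a b) < eps) /\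
        (forall y, cball q (R0 - eps) y ->
           exists a, cball (ps k) R0 a /\ dist (f a) y < eps).

(* Main.v *)
Require Import Defs.
From Stdlib Require Import Reals.
From Stdlib Require Import Lra List Classical ClassicalEpsilon FunctionalExtensionality PropExtensionality ProofIrrelevance Lia Cantor.
Require Import Defs.
Open Scope R_scope.

Lemma dist_self (X:MetricSpace) (x:X) : dist x x = 0.
Proof. apply dist_eq0; reflexivity. Qed.

Lemma dist_rev (X:MetricSpace) (x y z:X) : dist x z - dist y z <= dist x y.
Proof. pose proof (dist_tri X x y z). lra. Qed.

Lemma dist_rev2 (X:MetricSpace) (x y z:X) : Rabs (dist x z - dist y z) <= dist x y.
Proof.
  pose proof (dist_tri X x y z). pose proof (dist_tri X y x z).
  rewrite (dist_sym X y x) in H0. apply Rabs_le. lra.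
Qed.

Lemma dep_choice {A : Type} (Inv : nat -> A -> Prop) (Rl : nat -> A -> A -> Prop) :
  (exists a0, Inv 0%nat a0) -> (forall n a, Inv n a -> exists b, Inv (S n) b /\ Rl n a b) ->
  exists f : nat -> A, (forall n, Inv n (f n)) /\ forall n, Rl n (f n) (f (S n)).
Proof.
  intros [a0 H0] Hs.
  pose (g := fix g (n:nat) : {a | Inv n a} := match n with O => exist _ a0 H0
    | S m => let s := g m in
      let t := constructive_indefinite_description _ (Hs m (proj1_sig s) (proj2_sig s)) in
      exist _ (proj1_sig t) (proj1 (proj2_sig t)) end).
  exists (fun n => proj1_sig (g n)). split.
  - intros n; exact (proj2_sig (g n)).
  - intros n. simpl.
    destruct (constructive_indefinite_description _ _) as [b [Hb1 Hb2]]. simpl. exact Hb2.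
Qed.

Lemma pow2_ge (n:nat) : INR n + 1 <= 2 ^ n.
Proof.
  induction n; [simpl; lra|]. rewrite S_INR. simpl. pose proof (pos_INR n). lra.
Qed.

Lemma pow2_pos (n:nat) : 0 < 2 ^ n.
Proof. apply pow_lt; lra. Qed.

Lemma pow2_small (c eps : R) : 0 < eps -> exists n, c / 2 ^ n < eps.
Proof.
  intros He. destruct (archimed (Rabs c / eps)) as [H1 _].
  destruct (INR_unbounded (Rabs c / eps)) as [n Hn].
  exists n. pose proof (pow2_ge n). pose proof (pow2_pos n).
  apply Rmult_lt_reg_r with (2^n); [lra|]. unfold Rdiv. rewrite Rmult_assoc, Rinv_l by lra.
  rewrite Rmult_1_r.
  assert (Rabs c < eps * INR n).
  { apply Rmult_lt_reg_r with (/eps). apply Rinv_0_lt_compat; lra.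
    rewrite (Rmult_comm eps), Rmult_assoc, Rinv_r by lra. lra. }
  pose proof (Rle_abs c). nra.
Qed.

Inductive chain {X : MetricSpace} (L : X -> X -> Prop) (P : X -> Prop) : X -> X -> Prop :=
| ch_nil : forall x, P x -> chain L P x x
| ch_cons : forall x z y, P x -> L x z -> chain L P z y -> chain L P x y.

Lemma chain_Pl {X : MetricSpace} L P (x y : X) : chain L P x y -> P x.
Proof. destruct 1; auto. Qed.

Lemma chain_Pr {X : MetricSpace} L P (x y : X) : chain L P x y -> P y.
Proof. induction 1; auto. Qed.

Lemma chain_app {X : MetricSpace} L P (x y w : X) : chain L P x y -> chain L P y w -> chain L P x w.
Proof. induction 1; intros; auto. eapply ch_cons; eauto. Qed.

Lemma chain_snoc {X : MetricSpace} L P (x y w : X) : chain L P x y -> L y w -> P w -> chain L P x w.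
Proof.
  intros H Hl Hp. apply chain_app with y; auto.
  apply ch_cons with w; auto. eapply chain_Pr; eauto. constructor; auto.
Qed.

Lemma chain_mono {X : MetricSpace} (L L' : X -> X -> Prop) (P P' : X -> Prop) x y :
  (forall u v, P u -> P v -> L u v -> L' u v) -> (forall u, P u -> P' u) ->
  chain L P x y -> chain L' P' x y.
Proof.
  intros HL HP. induction 1. constructor; auto.
  apply ch_cons with z; auto. apply HL; auto. eapply chain_Pl; eauto.
Qed.

Lemma chain_refine {X : MetricSpace} (L L' : X -> X -> Prop) (P P' : X -> Prop) x y :
  (forall u v, P u -> P v -> L u v -> chain L' P' u v) -> (forall u, P u -> P' u) ->
  chain L P x y -> chain L' P' x y.
Proof.
  intros HL HP. induction 1. constructor; auto.
  apply chain_app with z; auto. apply HL; auto. eapply chain_Pl; eauto.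
Qed.

Lemma chain_bound {X : MetricSpace} L P (x y q : X) : chain L P x y ->
  exists R, forall z, chain L (fun w => P w /\ dist w q <= R) z y -> True.
Proof. intros; exists 0; auto. Qed.

Lemma chain_strengthen {X : MetricSpace} L P (Q : X -> Prop) x y :
  (forall z, P z -> Q z) -> chain L P x y -> chain L (fun z => P z /\ Q z) x y.
Proof. intros H. apply chain_mono; auto. Qed.

Lemma chain_fin_bound {X : MetricSpace} L P (x y : X) (g : X -> R) :
  chain L P x y -> exists lo hi, (forall z, P z -> True) /\
    chain L (fun z => P z /\ lo <= g z <= hi) x y.
Proof.
  induction 1.
  - exists (g x), (g x). split; auto. constructor. split; auto; lra.
  - destruct IHchain as [lo [hi [_ Hc]]].
    exists (Rmin lo (g x)), (Rmax hi (g x)). split; auto.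
    apply ch_cons with z.
    + split; auto. split; [apply Rmin_r|apply Rmax_r].
    + auto.
    + revert Hc. apply chain_mono; auto. intros u [Hu1 Hu2]. split; auto.
      pose proof (Rmin_l lo (g x)). pose proof (Rmax_l hi (g x)). lra.
Qed.

Lemma connected_chain (X : MetricSpace) (S : X -> Prop) (L : X -> X -> Prop) :
  connected_set X S ->
  (forall w, S w -> exists e, 0 < e /\ forall v, dist w v < e -> S v -> L w v) ->
  (forall v, S v -> exists e, 0 < e /\ forall u, dist v u < e -> S u -> L u v) ->
  forall x y, S x -> S y -> chain L S x y.
Proof.
  intros Hc H1 H2 x y Hx Hy.
  apply NNPP; intro Hn. apply Hc.
  exists (fun w => exists u e, 0 < e /\ chain L S x u /\ dist u w < e /\
             (forall v, dist u v < e -> S v -> L u v)).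
  exists (fun w => exists v e, 0 < e /\ S v /\ ~ chain L S x v /\ dist v w < e /\
             (forall u, dist v u < e -> S u -> L u v)).
  repeat split.
  - intros w [u [e [He [Hch [Hd Hl]]]]]. exists (e - dist u w). split; [lra|].
    intros v Hv. unfold ball in Hv. exists u, e. repeat split; auto.
    pose proof (dist_tri X u w v). lra.
  - intros w [v [e [He [Hs [Hch [Hd Hl]]]]]]. exists (e - dist v w). split; [lra|].
    intros u Hu. unfold ball in Hu. exists v, e. repeat split; auto.
    pose proof (dist_tri X v w u). lra.
  - intros w Hw. destruct (classic (chain L S x w)) as [Hch|Hch].
    + left. destruct (H1 w Hw) as [e [He Hl]]. exists w, e. rewrite dist_self. auto.
    + right. destruct (H2 w Hw) as [e [He Hl]]. exists w, e. rewrite dist_self. auto.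
  - intros w Hw [u [e [He [Hch [Hd Hl]]]]] [v [e' [He' [Hsv [Hch' [Hd' Hl']]]]]].
    apply Hch'. apply chain_snoc with w; auto. apply chain_snoc with u; auto.
  - exists x. split; auto. destruct (H1 x Hx) as [e [He Hl]]. exists x, e.
    rewrite dist_self. repeat split; auto. constructor; auto.
  - exists y. split; auto. destruct (H2 y Hy) as [e [He Hl]]. exists y, e.
    rewrite dist_self. repeat split; auto.
Qed.

Lemma Rabs_le_inv' (a b : R) : Rabs a <= b -> -b <= a <= b.
Proof. intros H. pose proof (Rle_abs a). pose proof (Rle_abs (-a)). rewrite Rabs_Ropp in H1. lra. Qed.

Lemma Rabs_lt_inv' (a b : R) : Rabs a < b -> -b < a < b.
Proof. intros H. pose proof (Rle_abs a). pose proof (Rle_abs (-a)). rewrite Rabs_Ropp in H1. lra. Qed.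

Definition is_closed (X : MetricSpace) (F : X -> Prop) := is_open X (fun z => ~ F z).

Lemma ball_open (X : MetricSpace) (c : X) r : is_open X (ball c r).
Proof.
  intros x Hx. unfold ball in *. exists (r - dist c x). split; [lra|].
  intros y Hy. unfold ball in Hy. pose proof (dist_tri X c x y). lra.
Qed.

Lemma cball_closed (X : MetricSpace) (c : X) R : is_closed X (cball c R).
Proof.
  intros z Hz. unfold cball in Hz. exists (dist c z - R). split; [lra|].
  intros w Hw. unfold ball, cball in *. pose proof (dist_tri X c w z).
  rewrite (dist_sym X w z) in H. lra.
Qed.

Lemma annulus_closed (X : MetricSpace) (p : X) a b : is_closed X (annulus X p a b).
Proof.
  intros z Hz. unfold annulus in Hz.
  destruct (Rlt_or_le (dist z p) a) as [H|H].
  - exists (a - dist z p). split; [lra|]. intros w Hw [Hw1 Hw2]. unfold ball in Hw.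
    pose proof (dist_tri X w z p). rewrite (dist_sym X w z) in H0. lra.
  - assert (b < dist z p) by (apply Rnot_le_lt; intro; apply Hz; split; auto).
    exists (dist z p - b). split; [lra|]. intros w Hw [Hw1 Hw2]. unfold ball in Hw.
    pose proof (dist_tri X z w p). lra.
Qed.

Lemma closed_sub_compact (X : MetricSpace) (K F : X -> Prop) :
  compact_set X K -> is_closed X F -> (forall z, F z -> K z) -> compact_set X F.
Proof.
  intros HK HF HFK G HGo HGc.
  destruct (HK (fun U => G U \/ U = (fun z => ~ F z))) as [l [Hl1 Hl2]].
  - intros U [HU|HU]; auto. subst; auto.
  - intros x Hx. destruct (classic (F x)) as [Hf|Hf].
    + destruct (HGc x Hf) as [U [HU1 HU2]]. exists U; auto.
    + exists (fun z => ~ F z). auto.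
  - assert (forall l, (forall U, In U l -> G U \/ U = (fun z => ~ F z)) ->
      exists l', (forall U, In U l' -> G U) /\
        forall x, F x -> (exists U, In U l /\ U x) -> exists U, In U l' /\ U x) as Hf.
    { clear. intros l; induction l as [|U l IH]; intros Hl.
      - exists nil. split; [intros U []|]. intros x _ [U [[] _]].
      - destruct IH as [l' [H1 H2]]. { intros; apply Hl; right; auto. }
        destruct (Hl U (or_introl eq_refl)) as [HU|HU].
        + exists (U :: l'). split.
          * intros V HV. destruct HV as [HV|HV]; [subst; auto|auto].
          * intros x Hx [V [HV HVx]]. destruct HV as [HV|HV].
            -- subst. exists V; split; [left|]; auto.
            -- destruct (H2 x Hx) as [W [HW1 HW2]]. exists V; auto. exists W; split; [right|]; auto.
        + exists l'. split; auto. intros x Hx [V [HV HVx]]. destruct HV as [HV|HV].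
          * subst. contradiction.
          * apply H2; auto. exists V; auto. }
    destruct (Hf l Hl1) as [l' [H1 H2]]. exists l'. split; auto.
Qed.

Definition NFC (X : MetricSpace) (G : (X -> Prop) -> Prop) (S : X -> Prop) :=
  ~ exists l : list (X -> Prop), (forall U, In U l -> G U) /\
      (forall z, S z -> exists U, In U l /\ U z).

Lemma NFC_split (X : MetricSpace) G (S : X -> Prop) (cs : list X) r :
  NFC X G S -> (forall y, S y -> exists c, In c cs /\ ball c r y) ->
  exists c, In c cs /\ NFC X G (fun z => S z /\ ball c r z).
Proof.
  intros HN Hcov. apply NNPP. intro Hn. apply HN.
  assert (forall cs', (forall c, In c cs' -> ~ NFC X G (fun z => S z /\ ball c r z)) ->
     exists l, (forall U, In U l -> G U) /\
       (forall z, S z -> (exists c, In c cs' /\ ball c r z) -> exists U, In U l /\ U z)) as Hc.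
  { induction cs' as [|c cs' IH]; intros Hall.
    - exists nil. split; [intros U []|]. intros z _ [c [[] _]].
    - destruct IH as [l [Hl1 Hl2]]. { intros; apply Hall; right; auto. }
      pose proof (Hall c (or_introl eq_refl)) as Hc. unfold NFC in Hc. apply NNPP in Hc.
      destruct Hc as [l' [Hl1' Hl2']].
      exists (l' ++ l). split.
      + intros U HU. apply in_app_or in HU. destruct HU; auto.
      + intros z Hz [c' [[<-|Hc'] Hb]].
        * destruct (Hl2' z (conj Hz Hb)) as [U [HU1 HU2]]. exists U. split; auto. apply in_or_app; auto.
        * destruct (Hl2 z Hz) as [U [HU1 HU2]]. exists c'; auto. exists U. split; auto. apply in_or_app; auto. }
  destruct (Hc cs) as [l [Hl1 Hl2]].
  { intros c Hc' HN'. apply Hn. exists c. auto. }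
  exists l. split; auto.
Qed.

Lemma cball_compact (X : MetricSpace) (D : nat) : complete X -> doubling X D ->
  forall (c : X) R, compact_set X (cball c R).
Proof.
  intros Hcomp Hdb c R G HGo HGc.
  apply NNPP. intro HN. fold (NFC X G (cball c R)) in HN.
  set (K := cball c R).
  set (Inv := fun n (S : X -> Prop) => NFC X G S /\ (forall z, S z -> K z) /\
                 exists x, forall z, S z -> dist x z < (Rabs R + 1) / 2 ^ n).
  destruct (dep_choice Inv (fun _ S S' => forall z, S' z -> S z)) as [Sq [HI HS]].
  - exists K. split; [auto|]. split; auto. exists c. intros z Hz. unfold K, cball in Hz.
    simpl. pose proof (Rle_abs R). lra.
  - intros n S [HN' [HK [x Hx]]].
    assert (0 < (Rabs R + 1) / 2 ^ n) as Hpos.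
    { apply Rdiv_lt_0_compat. pose proof (Rabs_pos R); lra. apply pow2_pos. }
    destruct (Hdb x _ Hpos) as [cs [_ Hcs]].
    destruct (NFC_split X G S cs ((Rabs R + 1) / 2 ^ n / 2) HN') as [c' [Hc' HN'']].
    { intros y Hy. apply Hcs. apply Hx; auto. }
    exists (fun z => S z /\ ball c' ((Rabs R + 1) / 2 ^ n / 2) z). split.
    + split; auto. split. intros z [Hz _]; auto. exists c'. intros z [_ Hz].
      unfold ball in Hz. simpl. replace ((Rabs R + 1) / (2 * 2 ^ n)) with ((Rabs R + 1) / 2 ^ n / 2).
      auto. field. pose proof (pow2_pos n); lra.
    + intros z [Hz _]; auto.
  -
    assert (forall n, exists z, Sq n z) as Hne.
    { intros n. destruct (HI n) as [HN' _]. apply NNPP. intro Hn. apply HN'.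
      exists nil. split; [intros U []|]. intros z Hz. exfalso. apply Hn. exists z; auto. }
    set (zs := fun n => proj1_sig (constructive_indefinite_description _ (Hne n))).
    assert (Hzs : forall n, Sq n (zs n)).
    { intros n. unfold zs. destruct (constructive_indefinite_description _ _). auto. }
    assert (Hsub : forall n m, (n <= m)%nat -> forall z, Sq m z -> Sq n z).
    { intros n m Hnm. induction Hnm; auto. }
    assert (Hcl : forall n z w, Sq n z -> Sq n w -> dist z w < 2 * ((Rabs R + 1) / 2 ^ n)).
    { intros n z w Hz Hw. destruct (HI n) as [_ [_ [x Hx]]].
      pose proof (Hx z Hz). pose proof (Hx w Hw). pose proof (dist_tri X z x w).
      rewrite (dist_sym X z x) in H1. lra. }
    destruct (Hcomp zs) as [z Hz].
    { intros eps Heps. destruct (pow2_small (2 * (Rabs R + 1)) eps Heps) as [N HN2].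
      exists N. intros m n Hm Hn.
      apply Rlt_le_trans with (2 * ((Rabs R + 1) / 2 ^ N)).
      apply Hcl; [apply (Hsub N m Hm); apply Hzs | apply (Hsub N n Hn); apply Hzs].
      replace (2 * ((Rabs R + 1) / 2 ^ N)) with (2 * (Rabs R + 1) / 2 ^ N) by (unfold Rdiv; ring).
      lra. }
    assert (HKz : K z).
    { unfold K, cball. apply Rnot_lt_le. intro Hlt.
      destruct (Hz (dist c z - R)) as [N HN2]. lra.
      destruct (HI N) as [_ [HK _]]. pose proof (HK _ (Hzs N)). unfold K, cball in H.
      pose proof (HN2 N (le_n N)). pose proof (dist_tri X c (zs N) z). lra. }
    destruct (HGc z HKz) as [U [HU HUz]].
    destruct (HGo U HU z HUz) as [e [He HUe]].
    destruct (pow2_small (4 * (Rabs R + 1)) e He) as [N1 HN1].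
    destruct (Hz (e/2)) as [N2 HN2]. lra.
    set (N := Nat.max N1 N2).
    destruct (HI N) as [HNF _]. apply HNF. exists (U :: nil). split.
    + intros V [<-|[]]; auto.
    + intros w Hw. exists U. split; [left; auto|]. apply HUe. unfold ball.
      pose proof (HN2 N (Nat.le_max_r _ _)).
      pose proof (Hcl N _ _ (Hzs N) Hw).
      assert ((Rabs R + 1) / 2 ^ N <= (Rabs R + 1) / 2 ^ N1).
      { unfold Rdiv. apply Rmult_le_compat_l. pose proof (Rabs_pos R); lra.
        apply Rinv_le_contravar. apply pow2_pos. apply Rle_pow. lra. apply Nat.le_max_l. }
      pose proof (dist_tri X z (zs N) w). rewrite (dist_sym X z (zs N)) in H2.
      unfold Rdiv in *. lra.
Qed.

Lemma fip (X : MetricSpace) (K : X -> Prop) (F : nat -> X -> Prop) :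
  compact_set X K -> (forall n, is_closed X (F n)) -> (forall n z, F (S n) z -> F n z) ->
  (forall z, K z -> ~ forall n, F n z) -> (forall n z, F n z -> K z) ->
  exists n, forall z, ~ F n z.
Proof.
  intros HK HF Hdec Hint HFK.
  assert (Hmono : forall n m, (n <= m)%nat -> forall z, F m z -> F n z).
  { intros n m H. induction H; auto. }
  destruct (HK (fun U => exists n, U = fun z => ~ F n z)) as [l [Hl1 Hl2]].
  - intros U [n ->]. apply HF.
  - intros x Hx. apply NNPP. intro Hn. apply (Hint x Hx). intro n. apply NNPP. intro Hf.
    apply Hn. exists (fun z => ~ F n z). split; auto. exists n; auto.
  - assert (forall l : list (X -> Prop), (forall U, In U l -> exists n, U = fun z => ~ F n z) ->
       exists N, forall U, In U l -> forall z, F N z -> ~ U z) as Hm.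
    { clear -Hmono. intros l; induction l as [|U l IH]; intros Hl.
      - exists 0%nat. intros U [].
      - destruct IH as [N HN]. { intros; apply Hl; right; auto. }
        destruct (Hl U (or_introl eq_refl)) as [n Hn].
        exists (Nat.max n N). intros V HV z Hz. destruct HV as [HV|HV].
        + subst. intro H. apply H. apply Hmono with (Nat.max n N); auto. apply Nat.le_max_l.
        + apply (HN V HV). apply Hmono with (Nat.max n N); auto. apply Nat.le_max_r. }
    destruct (Hm l Hl1) as [N HN]. exists N. intros z Hz.
    destruct (Hl2 z (HFK _ _ Hz)) as [U [HU1 HU2]]. exact (HN U HU1 z Hz HU2).
Qed.

Lemma gap (X : MetricSpace) (A B : X -> Prop) : compact_set X A ->
  (forall a, A a -> exists r, 0 < r /\ forall b, B b -> r <= dist a b) ->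
  exists d, 0 < d /\ forall a b, A a -> B b -> d <= dist a b.
Proof.
  intros HA Hr.
  destruct (HA (fun U => exists a r, A a /\ 0 < r /\ (forall b, B b -> r <= dist a b) /\
                  U = ball a (r/2))) as [l [Hl1 Hl2]].
  - intros U [a [r [_ [_ [_ ->]]]]]. apply ball_open.
  - intros x Hx. destruct (Hr x Hx) as [r [Hr0 Hrb]]. exists (ball x (r/2)). split.
    exists x, r. auto. unfold ball. rewrite dist_self. lra.
  - assert (forall l : list (X -> Prop), (forall U, In U l -> exists a r, A a /\ 0 < r /\
        (forall b, B b -> r <= dist a b) /\ U = ball a (r/2)) ->
       exists d, 0 < d /\ forall U, In U l -> forall z b, U z -> B b -> d <= dist z b) as Hm.
    { clear. intros l; induction l as [|U l IH]; intros Hl.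
      - exists 1. split; [lra|]. intros U [].
      - destruct IH as [d [Hd HN]]. { intros; apply Hl; right; auto. }
        destruct (Hl U (or_introl eq_refl)) as [a [r [Ha [Hr0 [Hrb ->]]]]].
        exists (Rmin d (r/2)). split. apply Rmin_glb_lt; lra.
        intros V HV z b Hz Hb. destruct HV as [HV|HV].
        + subst. unfold ball in Hz. pose proof (Hrb b Hb). pose proof (dist_tri X a z b).
          pose proof (Rmin_r d (r/2)). lra.
        + pose proof (HN V HV z b Hz Hb). pose proof (Rmin_l d (r/2)). lra. }
    destruct (Hm l Hl1) as [d [Hd HN]]. exists d. split; auto.
    intros a b Ha Hb. destruct (Hl2 a Ha) as [U [HU1 HU2]]. eapply HN; eauto.
Qed.

Definition Lch (X : MetricSpace) (e : R) : X -> X -> Prop := fun u v => dist u v < e.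

Lemma chain_e_mono (X : MetricSpace) (K : X -> Prop) e e' x y : e <= e' ->
  chain (Lch X e) K x y -> chain (Lch X e') K x y.
Proof. intros H. apply chain_mono; auto. unfold Lch; intros; lra. Qed.

Lemma inv_succ_small (eps : R) : 0 < eps -> exists n : nat, 1 / (INR n + 1) < eps.
Proof.
  intros He. destruct (INR_unbounded (1/eps)) as [n Hn]. exists n.
  pose proof (pos_INR n).
  apply Rmult_lt_reg_r with (INR n + 1). lra.
  unfold Rdiv. rewrite Rmult_assoc, Rinv_l by lra. 
  assert (1 < eps * (INR n + 1)).
  { apply Rmult_lt_reg_l with (/eps). apply Rinv_0_lt_compat; lra.
    rewrite <- Rmult_assoc, Rinv_l by lra. unfold Rdiv in Hn. lra. }
  lra.
Qed.

Lemma chain_continuum (X : MetricSpace) (K : X -> Prop) (x y : X) :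
  compact_set X K -> is_closed X K ->
  (forall e, 0 < e -> chain (Lch X e) K x y) ->
  exists Q, continuum X Q /\ Q x /\ Q y /\ forall z, Q z -> K z.
Proof.
  intros HK HKc Hch.
  set (Q := fun z => K z /\ forall e, 0 < e -> chain (Lch X e) K x z).
  assert (HKx : K x) by (apply (chain_Pl _ _ _ _ (Hch 1 Rlt_0_1))).
  assert (HKy : K y) by (apply (chain_Pr _ _ _ _ (Hch 1 Rlt_0_1))).
  assert (HQx : Q x) by (split; auto; intros; constructor; auto).
  assert (HQy : Q y) by (split; auto).
  assert (HQc : is_closed X Q).
  { intros z Hz. destruct (classic (K z)) as [Hk|Hk].
    - assert (exists e, 0 < e /\ ~ chain (Lch X e) K x z) as [e [He Hne]].
      { apply NNPP. intro H. apply Hz. split; auto. intros e He. apply NNPP. intro H'.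
        apply H. exists e; auto. }
      exists e. split; auto. intros w Hw [HKw HQw]. apply Hne.
      apply chain_snoc with w; auto. unfold Lch, ball in *. rewrite dist_sym; auto.
    - destruct (HKc z Hk) as [e [He Hb]]. exists e. split; auto. intros w Hw [Hkw _].
      exact (Hb w Hw Hkw). }
  assert (HQK : forall z, Q z -> K z) by (intros z [H _]; auto).
  assert (HQcomp : compact_set X Q) by (eapply closed_sub_compact; eauto).
  exists Q. split; [|split; [auto|split; auto]].
  split; auto.
  assert (Hmain : forall U V : X -> Prop, is_open X U -> is_open X V ->
     (forall z, Q z -> U z \/ V z) -> (forall z, Q z -> U z -> V z -> False) ->
     U x -> forall b, Q b -> V b -> False).
  { intros U V HU HV Hcov Hdis HUx b HQb HVb.
    set (A := fun z => Q z /\ U z). set (B := fun z => Q z /\ V z).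
    assert (HAc : is_closed X A).
    { intros z Hz. destruct (classic (Q z)) as [Hq|Hq].
      - assert (V z) by (destruct (Hcov z Hq); auto; exfalso; apply Hz; split; auto).
        destruct (HV z H) as [e [He Hb]]. exists e. split; auto. intros w Hw [HQw HUw].
        apply (Hdis w HQw HUw (Hb w Hw)).
      - destruct (HQc z Hq) as [e [He Hb]]. exists e. split; auto. intros w Hw [HQw _].
        exact (Hb w Hw HQw). }
    assert (HAcomp : compact_set X A) by (eapply closed_sub_compact with (K := Q); eauto;
       intros z [H _]; auto).
    destruct (gap X A B HAcomp) as [d [Hd Hgap]].
    { intros a [HQa HUa]. destruct (HU a HUa) as [r [Hr Hb]]. exists r. split; auto.
      intros b' [HQb' HVb']. apply Rnot_lt_le. intro Hlt. apply (Hdis b' HQb'); auto. }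
    set (U' := fun z => exists a, A a /\ dist a z < d/3).
    set (V' := fun z => exists b, B b /\ dist b z < d/3).
    assert (HUV : forall z, U' z -> V' z -> False).
    { intros z [a [Ha Haz]] [b' [Hb' Hbz]]. pose proof (Hgap a b' Ha Hb').
      pose proof (dist_tri X a z b'). rewrite (dist_sym X z b') in H0. lra. }
    set (F := fun (n : nat) z => K z /\ chain (Lch X (1 / (INR n + 1))) K x z /\ ~ U' z /\ ~ V' z).
    assert (Hpos : forall n : nat, 0 < 1 / (INR n + 1)).
    { intros n. pose proof (pos_INR n). apply Rdiv_lt_0_compat; lra. }
    destruct (fip X K F HK) as [N HN].
    - intros n z Hz. destruct (classic (K z)) as [Hk|Hk].
      2:{ destruct (HKc z Hk) as [e [He Hb]]. exists e. split; auto. intros w Hw [Hkw _].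
          exact (Hb w Hw Hkw). }
      destruct (classic (U' z)) as [Hu|Hu].
      { destruct Hu as [a [Ha Haz]]. exists (d/3 - dist a z). split; [lra|].
        intros w Hw [_ [_ [Hu' _]]]. apply Hu'. exists a. split; auto. unfold ball in Hw.
        pose proof (dist_tri X a z w). lra. }
      destruct (classic (V' z)) as [Hv|Hv].
      { destruct Hv as [a [Ha Haz]]. exists (d/3 - dist a z). split; [lra|].
        intros w Hw [_ [_ [_ Hv']]]. apply Hv'. exists a. split; auto. unfold ball in Hw.
        pose proof (dist_tri X a z w). lra. }
      exists (1 / (INR n + 1)). split; auto. intros w Hw [Hkw [Hcw _]]. apply Hz.
      split; auto. split; auto. apply chain_snoc with w; auto. unfold Lch, ball in *.
      rewrite dist_sym; auto.
    - intros n z [Hk [Hc [Hu Hv]]]. split; auto. split; auto. revert Hc. apply chain_e_mono.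
      rewrite S_INR. pose proof (pos_INR n). apply Rmult_le_compat_l; [lra|].
      apply Rinv_le_contravar; lra.
    - intros z Hz Hall. 
      assert (Q z).
      { split; auto. intros e He. destruct (inv_succ_small e He) as [n Hn].
        destruct (Hall n) as [_ [Hc _]]. revert Hc. apply chain_e_mono. lra. }
      destruct (Hall 0%nat) as [_ [_ [Hu Hv]]].
      destruct (Hcov z H) as [H'|H'].
      + apply Hu. exists z. split. split; auto. rewrite dist_self. lra.
      + apply Hv. exists z. split. split; auto. rewrite dist_self. lra.
    - intros n z [H _]; auto.
    - set (e := Rmin (1 / (INR N + 1)) (d/3)).
      assert (He : 0 < e) by (apply Rmin_glb_lt; auto; lra).
      destruct HQb as [HKb Hcb]. pose proof (Hcb e He) as Hc.
      assert (forall z w, chain (Lch X e) K z w -> U' z -> chain (Lch X (1 / (INR N + 1))) K x z -> U' w) as Hinv.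
      { induction 1 as [z Hz|z z' w Hz Hl Hc' IH]; auto.
        intros Hu Hcz. apply IH.
        - assert (Hcz' : chain (Lch X (1 / (INR N + 1))) K x z').
          { apply chain_snoc with z; auto. unfold Lch in *. pose proof (Rmin_l (1 / (INR N + 1)) (d/3)). fold e in H. lra. eapply chain_Pl; eauto. }
          apply NNPP. intro Hnu. apply (HN z'). split. eapply chain_Pl; eauto. split; auto. split; auto.
          intros [b' [Hb' Hbz]]. destruct Hu as [a [Ha Haz]]. pose proof (Hgap a b' Ha Hb').
          unfold Lch in Hl. pose proof (Rmin_r (1 / (INR N + 1)) (d/3)). fold e in H0.
          pose proof (dist_tri X a z z'). pose proof (dist_tri X a z' b').
          rewrite (dist_sym X z' b') in H2. lra.
        - apply chain_snoc with z; auto. unfold Lch in *. pose proof (Rmin_l (1 / (INR N + 1)) (d/3)). fold e in H. lra. eapply chain_Pl; eauto. }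
      apply (HUV b).
      + apply (Hinv x b Hc). exists x. split. split; auto. rewrite dist_self. lra. constructor; auto.
      + exists b. split. split; auto. split; auto. rewrite dist_self. lra. }
  intros [U [V [HU [HV [Hcov [Hdis [[a [HQa HUa]] [b [HQb HVb]]]]]]]]].
  destruct (Hcov x HQx) as [Hx|Hx].
  - exact (Hmain U V HU HV Hcov Hdis Hx b HQb HVb).
  - refine (Hmain V U HV HU _ _ Hx a HQa HUa).
    + intros z Hz; destruct (Hcov z Hz); auto.
    + intros z Hz H1 H2; exact (Hdis z Hz H2 H1).
Qed.

Lemma cover_step (Z : MetricSpace) (D : nat) : doubling Z D ->
  forall r, 0 < r -> forall cs : list Z, exists cs', (length cs' <= D * length cs)%nat /\
    forall y, (exists c, In c cs /\ ball c r y) -> exists c', In c' cs' /\ ball c' (r/2) y.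
Proof.
  intros Hdb r Hr cs. induction cs as [|c cs IH].
  - exists nil. split; simpl; [lia|]. intros y [c [[] _]].
  - destruct IH as [cs' [Hl Hc]]. destruct (Hdb c r Hr) as [l [Hl' Hc']].
    exists (l ++ cs'). split. rewrite length_app. simpl. lia.
    intros y [c0 [[<-|Hin] Hb]].
    + destruct (Hc' y Hb) as [c' [H1 H2]]. exists c'. split; auto. apply in_or_app; auto.
    + destruct (Hc y) as [c' [H1 H2]]. exists c0; auto. exists c'. split; auto. apply in_or_app; auto.
Qed.

Lemma cover_iter (Z : MetricSpace) (D : nat) : doubling Z D ->
  forall (p : Z) R, 0 < R -> forall m, exists cs : list Z, (length cs <= D ^ m)%nat /\
    forall y, dist p y < R -> exists c, In c cs /\ dist c y < R / 2 ^ m.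
Proof.
  intros Hdb p R HR m. induction m.
  - exists (p :: nil). split; simpl; [lia|]. intros y Hy. exists p. split; [left; auto|].
    lra.
  - destruct IHm as [cs [Hl Hc]].
    assert (Hpos : 0 < R / 2 ^ m) by (apply Rdiv_lt_0_compat; auto; apply pow2_pos).
    destruct (cover_step Z D Hdb _ Hpos cs) as [cs' [Hl' Hc']].
    exists cs'. split. simpl. rewrite Nat.mul_comm. 
    apply Nat.le_trans with (D * length cs)%nat; auto. rewrite Nat.mul_comm. apply Nat.mul_le_mono_r. auto.
    intros y Hy. destruct (Hc' y (Hc y Hy)) as [c' [H1 H2]]. exists c'. split; auto.
    unfold ball in H2. simpl. replace (R / (2 * 2 ^ m)) with (R / 2 ^ m / 2); auto.
    field. pose proof (pow2_pos m); lra.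
Qed.

Lemma cover_filter (Z : MetricSpace) (p : Z) R r : forall cs : list Z,
  exists cs', (length cs' <= length cs)%nat /\ (forall c, In c cs' -> dist p c < R) /\
    forall y, dist p y < R -> (exists c, In c cs /\ dist c y < r) ->
      exists c', In c' cs' /\ dist c' y < 2 * r.
Proof.
  induction cs as [|c cs IH].
  - exists nil. split; [simpl; lia|]. split; [intros c []|]. intros y _ [c [[] _]].
  - destruct IH as [cs' [H1 [H2 H3]]].
    destruct (classic (exists w, dist p w < R /\ dist c w < r)) as [[w [Hw1 Hw2]]|Hn].
    + exists (w :: cs'). split; [simpl; lia|]. split.
      * intros c0 [<-|Hin]; auto.
      * intros y Hy [c0 [[<-|Hin] Hd]].
        -- exists w. split; [left; auto|]. pose proof (dist_tri Z w c y).
           rewrite (dist_sym Z w c) in H. lra.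
        -- destruct (H3 y Hy) as [c' [Hc1 Hc2]]. exists c0; auto. exists c'. split; [right|]; auto.
    + exists cs'. split; [simpl; lia|]. split; auto.
      intros y Hy [c0 [[<-|Hin] Hd]].
      * exfalso. apply Hn. exists y. auto.
      * apply H3; auto. exists c0; auto.
Qed.

Lemma net_exists (Z : MetricSpace) (D : nat) : doubling Z D ->
  forall (p : Z) R, 0 < R -> forall m, exists cs : list Z, (length cs <= D ^ m)%nat /\
    (forall c, In c cs -> dist p c < R) /\
    forall y, dist p y < R -> exists c, In c cs /\ dist c y < 2 * (R / 2 ^ m).
Proof.
  intros Hdb p R HR m. destruct (cover_iter Z D Hdb p R HR m) as [cs [Hl Hc]].
  destruct (cover_filter Z p R (R / 2 ^ m) cs) as [cs' [H1 [H2 H3]]].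
  exists cs'. split; [lia|]. split; auto.
Qed.

Definition SI (f : nat -> nat) := forall n, (f n < f (S n))%nat.

Lemma SI_mono f : SI f -> forall n m, (n <= m)%nat -> (f n <= f m)%nat.
Proof. intros H n m Hnm. induction Hnm; auto. specialize (H m). lia. Qed.

Lemma SI_ge f : SI f -> forall n, (n <= f n)%nat.
Proof. intros H n. induction n; [lia|]. specialize (H n). lia. Qed.

Lemma SI_comp f g : SI f -> SI g -> SI (fun n => f (g n)).
Proof.
  intros Hf Hg n. pose proof (Hg n). pose proof (SI_mono f Hf (S (g n)) (g (S n)) H).
  specialize (Hf (g n)). lia.
Qed.

Definition cvg (v : nat -> R) (l : R) := forall e, 0 < e -> exists N, forall n, (N <= n)%nat -> Rabs (v n - l) < e.

Lemma cvg_sub v l f : SI f -> cvg v l -> cvg (fun n => v (f n)) l.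
Proof.
  intros Hf Hv e He. destruct (Hv e He) as [N HN]. exists N. intros n Hn.
  apply HN. pose proof (SI_ge f Hf n). lia.
Qed.

Lemma BW_sub (v : nat -> R) B : (forall n, Rabs (v n) <= B) ->
  exists f l, SI f /\ cvg (fun n => v (f n)) l.
Proof.
  intros HB.
  destruct (Bolzano_Weierstrass v (fun c => -B <= c <= B) (compact_P3 (-B) B)) as [l Hl].
  { intros n. apply Rabs_le_inv'. auto. }
  assert (Hstep : forall n N, exists p, (N <= p)%nat /\ Rabs (v p - l) < 1 / (INR n + 1)).
  { intros n N. assert (Hp : 0 < 1 / (INR n + 1)) by (pose proof (pos_INR n); apply Rdiv_lt_0_compat; lra).
    destruct (Hl (Rtopology.disc l (mkposreal _ Hp)) N) as [p [Hp1 Hp2]].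
    { exists (mkposreal _ Hp). intros x Hx; auto. }
    exists p. split; auto. }
  destruct (dep_choice (fun n p => Rabs (v p - l) < 1 / (INR n + 1)) (fun _ p p' => (p < p')%nat)) as [f [H1 H2]].
  - destruct (Hstep 0%nat 0%nat) as [p [_ Hp]]. exists p; auto.
  - intros n p _. destruct (Hstep (S n) (S p)) as [p' [Hp1 Hp2]]. exists p'. split; auto.
  - exists f, l. split; auto. intros e He. destruct (INR_unbounded (1/e)) as [N HN].
    exists N. intros n Hn. apply Rlt_le_trans with (1 / (INR n + 1)); auto.
    pose proof (pos_INR N). pose proof (le_INR _ _ Hn).
    assert (1 / e < INR n + 1) by lra.
    apply Rmult_le_reg_r with (INR n + 1). lra. unfold Rdiv.
    rewrite Rmult_assoc, Rinv_l by lra. 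
    assert (1 < e * (INR n + 1)).
    { apply Rmult_lt_reg_l with (/e). apply Rinv_0_lt_compat; lra.
      rewrite <- Rmult_assoc, Rinv_l by lra. unfold Rdiv in H0. lra. }
    lra.
Qed.

Lemma diagonal (u : nat -> nat -> R) : (forall c, exists B, forall k, Rabs (u c k) <= B) ->
  exists phi, SI phi /\ forall c, exists l, cvg (fun n => u c (phi n)) l.
Proof.
  intros HB.
  destruct (dep_choice (fun n (Psi : nat -> nat) => SI Psi /\ forall c, (c <= n)%nat -> exists l, cvg (fun t => u c (Psi t)) l)
             (fun _ Psi Psi' => exists s, SI s /\ forall t, Psi' t = Psi (s t))) as [Ps [HI HR]].
  - destruct (HB 0%nat) as [B HB0]. destruct (BW_sub (u 0%nat) B HB0) as [f [l [Hf Hl]]].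
    exists f. split; auto. intros c Hc. assert (c = 0%nat) by lia. subst. exists l; auto.
  - intros n Psi [HPsi Hc]. destruct (HB (S n)) as [B HBn].
    destruct (BW_sub (fun t => u (S n) (Psi t)) B) as [s [l [Hs Hl]]]. { intros; apply HBn. }
    exists (fun t => Psi (s t)). split.
    + split. apply SI_comp; auto. intros c Hcn. destruct (Nat.eq_dec c (S n)) as [->|Hne].
      * exists l; auto.
      * destruct (Hc c ltac:(lia)) as [l' Hl']. exists l'. apply (cvg_sub (fun t => u c (Psi t))); auto.
    + exists s. split; auto.
  - exists (fun n => Ps n n). split.
    + intros n. destruct (HR n) as [s [Hs Heq]]. rewrite Heq.
      destruct (HI n) as [HPn _]. pose proof (SI_ge s Hs (S n)).
      apply Nat.lt_le_trans with (Ps n (S n)). apply HPn. apply SI_mono; auto.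
    + intros c. destruct (HI c) as [_ Hc]. destruct (Hc c (le_n c)) as [l Hl]. exists l.
      assert (Hrel : forall m, (c <= m)%nat -> exists s, SI s /\ forall t, Ps m t = Ps c (s t)).
      { intros m Hm. induction Hm.
        - exists (fun t => t). split. intros n; lia. auto.
        - destruct IHHm as [s [Hs Heq]]. destruct (HR m) as [s' [Hs' Heq']].
          exists (fun t => s (s' t)). split. apply SI_comp; auto. intros t. rewrite Heq', Heq. auto. }
      intros e He. destruct (Hl e He) as [N HN]. exists (Nat.max N c). intros n Hn.
      destruct (Hrel n ltac:(lia)) as [s [Hs Heq]]. rewrite Heq. apply HN.
      pose proof (SI_ge s Hs n). lia.
Qed.

Definition Rsup (E : R -> Prop) : R :=
  match excluded_middle_informative (bound E /\ exists x, E x) with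
  | left H => proj1_sig (completeness E (proj1 H) (proj2 H))
  | right _ => 0 end.

Lemma Rsup_ub E : bound E -> forall t, E t -> t <= Rsup E.
Proof.
  intros Hb t Ht. unfold Rsup. destruct (excluded_middle_informative _) as [H|H].
  - pose proof (proj2_sig (completeness E (proj1 H) (proj2 H))) as [Hm _]. apply Hm; auto.
  - exfalso; apply H; split; eauto.
Qed.

Lemma Rsup_le E c : (exists x, E x) -> (forall t, E t -> t <= c) -> Rsup E <= c.
Proof.
  intros Hne Hc. unfold Rsup. destruct (excluded_middle_informative _) as [H|H].
  - pose proof (proj2_sig (completeness E (proj1 H) (proj2 H))) as [_ Hm]. apply Hm. intros t Ht; auto.
  - exfalso; apply H; split; auto. exists c. intros t Ht; auto.
Qed.

Definition pseudo {I : Type} (d : I -> I -> R) :=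
  (forall a, d a a = 0) /\ (forall a b, d a b = d b a) /\ (forall a b c, d a c <= d a b + d b c).

Lemma pseudo_nonneg {I} (d : I -> I -> R) : pseudo d -> forall a b, 0 <= d a b.
Proof. intros [H0 [Hs Ht]] a b. pose proof (Ht a b a). rewrite H0, (Hs b a) in H. lra. Qed.

Definition Ypoint {I : Type} (d : I -> I -> R) (g : I -> R) :=
  forall e, 0 < e -> exists a, forall b, Rabs (g b - d a b) <= e.

Definition Ycar {I : Type} (d : I -> I -> R) := {g : I -> R | Ypoint d g}.

Definition Ydist {I : Type} (d : I -> I -> R) (g h : Ycar d) : R :=
  Rsup (fun t => exists b, t = Rabs (proj1_sig g b - proj1_sig h b)).



Lemma Ybound {I : Type} (i0 : I) (d : I -> I -> R) : pseudo d -> forall g h : Ycar d,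
  bound (fun t => exists b, t = Rabs (proj1_sig g b - proj1_sig h b)).
Proof.
  intros Hps [g Hg] [h Hh]. simpl. destruct (Hg 1 Rlt_0_1) as [a Ha]. destruct (Hh 1 Rlt_0_1) as [a' Ha'].
  exists (2 + d a a'). intros t [b ->]. destruct Hps as [H0 [Hs Ht]].
  pose proof (Ha b). pose proof (Ha' b). pose proof (Ht a a' b). pose proof (Ht a' a b).
  pose proof (Hs a' a).
  apply Rabs_le_inv' in H. apply Rabs_le_inv' in H1. apply Rabs_le. lra.
Qed.

Lemma Ydist_ge {I : Type} (i0 : I) (d : I -> I -> R) : pseudo d -> forall (g h : Ycar d) b,
  Rabs (proj1_sig g b - proj1_sig h b) <= Ydist d g h.
Proof. intros Hps g h b. apply Rsup_ub. apply (Ybound i0); auto. exists b; auto. Qed.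

Lemma Ydist_le {I : Type} (i0 : I) (d : I -> I -> R) : forall (g h : Ycar d) c,
  (forall b, Rabs (proj1_sig g b - proj1_sig h b) <= c) -> Ydist d g h <= c.
Proof. intros g h c H. apply Rsup_le. exists (Rabs (proj1_sig g i0 - proj1_sig h i0)). exists i0; auto.
  intros t [b ->]; auto. Qed.

Lemma Ydist_nonneg {I : Type} (i0 : I) (d : I -> I -> R) (Hps : pseudo d) (g h : Ycar d) : 0 <= Ydist d g h.
Proof. pose proof (Ydist_ge i0 d Hps g h i0). pose proof (Rabs_pos (proj1_sig g i0 - proj1_sig h i0)). lra. Qed.

Lemma Ydist_eq0 {I : Type} (i0 : I) (d : I -> I -> R) (Hps : pseudo d) (g h : Ycar d) : Ydist d g h = 0 <-> g = h.
Proof.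
  split.
  - intros H. assert (Hb : forall b, Rabs (proj1_sig g b - proj1_sig h b) <= 0).
    { intros b. rewrite <- H. apply Ydist_ge; auto. }
    destruct g as [g Hg], h as [h Hh]. simpl in Hb.
    assert (g = h).
    { apply functional_extensionality. intros b. pose proof (Rabs_le_inv' _ _ (Hb b)). lra. }
    subst. f_equal. apply proof_irrelevance.
  - intros ->. apply Rle_antisym. apply Ydist_le; auto. intros b. rewrite Rminus_diag, Rabs_R0. lra.
    apply Ydist_nonneg; auto.
Qed.

Lemma Ydist_sym {I : Type} (i0 : I) (d : I -> I -> R) (Hps : pseudo d) (g h : Ycar d) : Ydist d g h = Ydist d h g.
Proof.
  apply Rle_antisym; apply Ydist_le; auto; intros b; rewrite Rabs_minus_sym; apply Ydist_ge; auto.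
Qed.

Lemma Ydist_tri {I : Type} (i0 : I) (d : I -> I -> R) (Hps : pseudo d) (g h w : Ycar d) :
  Ydist d g w <= Ydist d g h + Ydist d h w.
Proof.
  apply Ydist_le; auto. intros b. pose proof (Ydist_ge i0 d Hps g h b). pose proof (Ydist_ge i0 d Hps h w b).
  pose proof (Rabs_triang (proj1_sig g b - proj1_sig h b) (proj1_sig h b - proj1_sig w b)).
  replace (proj1_sig g b - proj1_sig h b + (proj1_sig h b - proj1_sig w b)) with (proj1_sig g b - proj1_sig w b) in H1 by ring.
  lra.
Qed.

Definition Ymet {I : Type} (i0 : I) (d : I -> I -> R) (Hps : pseudo d) : MetricSpace :=
  {| carrier := Ycar d; dist := Ydist d;
     dist_nonneg := Ydist_nonneg i0 d Hps; dist_eq0 := Ydist_eq0 i0 d Hps;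
     dist_sym := Ydist_sym i0 d Hps; dist_tri := Ydist_tri i0 d Hps |}.

Lemma iota_point {I : Type} (d : I -> I -> R) (a : I) : Ypoint d (d a).
Proof. intros e He. exists a. intros b. rewrite Rminus_diag, Rabs_R0. lra. Qed.

Definition iota {I : Type} (i0 : I) (d : I -> I -> R) (Hps : pseudo d) (a : I) : Ymet i0 d Hps :=
  exist _ (d a) (iota_point d a).

Lemma iota_dist {I : Type} (i0 : I) (d : I -> I -> R) (Hps : pseudo d) (a a' : I) :
  dist (iota i0 d Hps a) (iota i0 d Hps a') = d a a'.
Proof.
  simpl. apply Rle_antisym.
  - apply Ydist_le; auto. intros b. simpl. destruct Hps as [H0 [Hs Ht]].
    pose proof (Ht a a' b). pose proof (Ht a' a b). pose proof (Hs a' a). apply Rabs_le. lra.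
  - pose proof (Ydist_ge i0 d Hps (iota i0 d Hps a) (iota i0 d Hps a') a') as H. unfold iota in *. simpl in H.
    pose proof Hps as [H0 [Hs Ht]]. rewrite (H0 a'), Rminus_0_r in H.
    pose proof (Rle_abs (d a a')). lra.
Qed.

Lemma iota_dense {I : Type} (i0 : I) (d : I -> I -> R) (Hps : pseudo d) (g : Ymet i0 d Hps) e :
  0 < e -> exists a, dist g (iota i0 d Hps a) <= e.
Proof.
  intros He. destruct g as [g Hg]. destruct (Hg e He) as [a Ha]. exists a. simpl.
  apply Ydist_le; auto.
Qed.

Lemma Ymet_complete {I : Type} (i0 : I) (d : I -> I -> R) (Hps : pseudo d) : complete (Ymet i0 d Hps).
Proof.
  intros u Hu.
  assert (Hcb : forall b, Cauchy_crit (fun m => proj1_sig (u m) b)).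
  { intros b e He. destruct (Hu e He) as [N HN]. exists N. intros m n Hm Hn. unfold R_dist.
    pose proof (Ydist_ge i0 d Hps (u m) (u n) b). pose proof (HN m n Hm Hn). simpl in H0. lra. }
  set (G := fun b => proj1_sig (R_complete _ (Hcb b))).
  assert (HG : forall b, Un_cv (fun m => proj1_sig (u m) b) (G b)).
  { intros b. unfold G. destruct (R_complete _ _). auto. }
  assert (Hunif : forall e, 0 < e -> exists N, forall m, (N <= m)%nat -> forall b, Rabs (proj1_sig (u m) b - G b) <= e).
  { intros e He. destruct (Hu e He) as [N HN]. exists N. intros m Hm b.
    apply le_epsilon. intros e' He'. destruct (HG b e' He') as [N' HN'].
    set (n := Nat.max N N'). pose proof (HN m n Hm (Nat.le_max_l _ _)). simpl in H.
    pose proof (Ydist_ge i0 d Hps (u m) (u n) b). pose proof (HN' n (Nat.le_max_r _ _)).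
    unfold R_dist in H1. pose proof (Rabs_triang (proj1_sig (u m) b - proj1_sig (u n) b) (proj1_sig (u n) b - G b)).
    replace (proj1_sig (u m) b - proj1_sig (u n) b + (proj1_sig (u n) b - G b)) with (proj1_sig (u m) b - G b) in H2 by ring.
    lra. }
  assert (HGp : Ypoint d G).
  { intros e He. destruct (Hunif (e/2)) as [N HN]. lra.
    destruct (proj2_sig (u N) (e/2)) as [a Ha]. lra. exists a. intros b.
    pose proof (HN N (le_n N) b). pose proof (Ha b).
    pose proof (Rabs_triang (G b - proj1_sig (u N) b) (proj1_sig (u N) b - d a b)).
    replace (G b - proj1_sig (u N) b + (proj1_sig (u N) b - d a b)) with (G b - d a b) in H1 by ring.
    rewrite Rabs_minus_sym in H. lra. }
  exists (exist _ G HGp). intros e He. destruct (Hunif (e/2)) as [N HN]. lra.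
  exists N. intros n Hn. simpl. apply Rle_lt_trans with (e/2); [|lra].
  apply Ydist_le; auto.
Qed.

Lemma ev_list {I : Type} (l : list I) (Q : I -> nat -> Prop) :
  (forall a, In a l -> exists N, forall n, (N <= n)%nat -> Q a n) ->
  exists N, forall n, (N <= n)%nat -> forall a, In a l -> Q a n.
Proof.
  induction l as [|a l IH]; intros H.
  - exists 0%nat. intros n _ a [].
  - destruct IH as [N HN]. { intros; apply H; right; auto. }
    destruct (H a (or_introl eq_refl)) as [N' HN'].
    exists (Nat.max N N'). intros n Hn b [<-|Hb].
    + apply HN'. lia.
    + apply HN; auto. lia.
Qed.

Lemma pigeon {I : Type} (l : list I) (P : I -> nat -> Prop) :
  (forall N, exists n, (N <= n)%nat /\ exists a, In a l /\ P a n) ->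
  exists a, In a l /\ forall N, exists n, (N <= n)%nat /\ P a n.
Proof.
  induction l as [|a l IH]; intros H.
  - destruct (H 0%nat) as [n [_ [a [[] _]]]].
  - destruct (classic (forall N, exists n, (N <= n)%nat /\ P a n)) as [Ha|Ha].
    + exists a. split; [left|]; auto.
    + apply not_all_ex_not in Ha. destruct Ha as [N0 HN0].
      destruct IH as [b [Hb1 Hb2]].
      * intros N. destruct (H (Nat.max N N0)) as [n [Hn [b [[<-|Hb] Hp]]]].
        -- exfalso. apply HN0. exists n. split; auto. lia.
        -- exists n. split; [lia|]. exists b; auto.
      * exists b. split; [right|]; auto.
Qed.

Lemma dist_diff (Z : MetricSpace) (u v z w : Z) : Rabs (dist u v - dist z w) <= dist u z + dist v w.
Proof.
  pose proof (dist_tri Z u z v). pose proof (dist_tri Z z w v).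
  pose proof (dist_tri Z z u w). pose proof (dist_tri Z u v w).
  pose proof (dist_sym Z z u). pose proof (dist_sym Z w v).
  apply Rabs_le. lra.
Qed.

Lemma cvg_unique v l l' : cvg v l -> cvg v l' -> l = l'.
Proof.
  intros H H'. apply Rle_antisym; apply le_epsilon; intros e He;
  destruct (H (e/2)) as [N HN]; try lra; destruct (H' (e/2)) as [N' HN']; try lra;
  pose proof (HN (Nat.max N N') (Nat.le_max_l _ _)); pose proof (HN' (Nat.max N N') (Nat.le_max_r _ _));
  apply Rabs_lt_inv' in H0; apply Rabs_lt_inv' in H1; lra.
Qed.

Lemma cvg_le3 v w x lv lw lx : (forall n, v n <= w n + x n) -> cvg v lv -> cvg w lw -> cvg x lx -> lv <= lw + lx.
Proof.
  intros H Hv Hw Hx. apply le_epsilon. intros e He.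
  destruct (Hv (e/3)) as [N1 H1]; try lra. destruct (Hw (e/3)) as [N2 H2]; try lra.
  destruct (Hx (e/3)) as [N3 H3]; try lra.
  set (n := Nat.max N1 (Nat.max N2 N3)).
  pose proof (H1 n ltac:(unfold n; lia)). pose proof (H2 n ltac:(unfold n; lia)). pose proof (H3 n ltac:(unfold n; lia)).
  apply Rabs_lt_inv' in H0. apply Rabs_lt_inv' in H4. apply Rabs_lt_inv' in H5. pose proof (H n). lra.
Qed.

Theorem GH_abstract (Zs : nat -> MetricSpace) (ps xs ys : forall k, Zs k) (I : Type)
  (T : forall k, I -> Zs k) (a0 a1 a2 : I)
  (HT0 : forall k, T k a0 = ps k) (HT1 : forall k, T k a1 = xs k) (HT2 : forall k, T k a2 = ys k)
  (Hbd : forall a, exists B, forall k, dist (ps k) (T k a) <= B)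
  (Hnet : forall R0 eps, 0 < eps -> exists l : list I, forall k z, dist (ps k) z <= R0 ->
            exists a, In a l /\ dist (T k a) z < eps)
  (e : nat -> I * I) (He : forall a b, exists c, e c = (a, b)) :
  exists phi, SI phi /\ exists Y : MetricSpace, complete Y /\ exists q x y : Y,
    forall R0 eps, 0 < R0 -> 0 < eps -> exists N, forall k, (N <= k)%nat ->
      exists f : Zs (phi k) -> Y, f (ps (phi k)) = q /\
        (forall a b, cball (ps (phi k)) R0 a -> cball (ps (phi k)) R0 b ->
           Rabs (dist (f a) (f b) - dist a b) < eps) /\
        (forall y0, cball q (R0 - eps) y0 ->
           exists a, cball (ps (phi k)) R0 a /\ dist (f a) y0 < eps) /\
        dist (f (xs (phi k))) x < eps /\ dist (f (ys (phi k))) y < eps.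
Proof.
  set (u := fun c k => dist (T k (fst (e c))) (T k (snd (e c)))).
  destruct (diagonal u) as [phi [Hphi Hlim]].
  { intros c. destruct (Hbd (fst (e c))) as [B1 HB1]. destruct (Hbd (snd (e c))) as [B2 HB2].
    exists (B1 + B2). intros k. unfold u. rewrite Rabs_pos_eq by apply dist_nonneg.
    pose proof (dist_tri _ (T k (fst (e c))) (ps k) (T k (snd (e c)))).
    pose proof (dist_sym _ (T k (fst (e c))) (ps k)). pose proof (HB1 k). pose proof (HB2 k). lra. }
  assert (Hex : forall a b, exists l, cvg (fun n => dist (T (phi n) a) (T (phi n) b)) l).
  { intros a b. destruct (He a b) as [c Hc]. destruct (Hlim c) as [l Hl]. exists l.
    unfold u in Hl. rewrite Hc in Hl. simpl in Hl. auto. }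
  set (delta := fun a b => proj1_sig (constructive_indefinite_description _ (Hex a b))).
  assert (Hd : forall a b, cvg (fun n => dist (T (phi n) a) (T (phi n) b)) (delta a b)).
  { intros a b. unfold delta. destruct (constructive_indefinite_description _ _). auto. }
  assert (Hps : pseudo delta).
  { split; [|split].
    - intros a. apply (cvg_unique (fun n => dist (T (phi n) a) (T (phi n) a))); auto.
      intros ep Hep. exists 0%nat. intros n _. rewrite dist_self, Rminus_0_r, Rabs_R0. auto.
    - intros a b. apply (cvg_unique (fun n => dist (T (phi n) a) (T (phi n) b))); auto.
      intros ep Hep. destruct (Hd b a ep Hep) as [N HN]. exists N. intros n Hn.
      rewrite dist_sym. auto.
    - intros a b c. eapply cvg_le3; [|apply Hd|apply Hd|apply Hd]. intros n. apply dist_tri. }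
  set (io := iota a0 delta Hps).
  exists phi. split; auto. exists (Ymet a0 delta Hps). split. apply Ymet_complete.
  exists (io a0), (io a1), (io a2).
  intros R0 eps HR0 Heps.
  set (eta := eps / 10).
  assert (Heta : 0 < eta) by (unfold eta; lra).
  destruct (Hbd a1) as [B1 HB1]. destruct (Hbd a2) as [B2 HB2].
  assert (0 <= B1) by (pose proof (HB1 0%nat); pose proof (dist_nonneg _ (ps 0%nat) (T 0%nat a1)); lra).
  assert (0 <= B2) by (pose proof (HB2 0%nat); pose proof (dist_nonneg _ (ps 0%nat) (T 0%nat a2)); lra).
  set (Rn := R0 + B1 + B2).
  destruct (Hnet Rn eta Heta) as [l Hl].
  set (l' := a0 :: a1 :: a2 :: l).
  destruct (ev_list l' (fun a n => forall b, In b l' ->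
     Rabs (dist (T (phi n) a) (T (phi n) b) - delta a b) < eta)) as [N HN].
  { intros a Ha. apply ev_list. intros b Hb. apply Hd; auto. }
  exists N. intros k Hk.
  set (pk := ps (phi k)).
  assert (Hfex : forall z, dist pk z <= Rn -> exists a, In a l' /\ dist (T (phi k) a) z < eta /\ (z = pk -> a = a0)).
  { intros z Hz. destruct (classic (z = pk)) as [->|Hne].
    - exists a0. split; [left; auto|]. split; auto. unfold pk. rewrite HT0, dist_self. auto.
    - destruct (Hl (phi k) z Hz) as [a [Ha1 Ha2]]. exists a. split; [right; right; right; auto|].
      split; auto. intros; contradiction. }
  set (f := fun z => match excluded_middle_informative (exists a, In a l' /\ dist (T (phi k) a) z < eta /\ (z = pk -> a = a0)) with
                     | left H => io (proj1_sig (constructive_indefinite_description _ H))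
                     | right _ => io a0 end).
  assert (Hf : forall z, dist pk z <= Rn -> exists a, In a l' /\ dist (T (phi k) a) z < eta /\ (z = pk -> a = a0) /\ f z = io a).
  { intros z Hz. unfold f. destruct (excluded_middle_informative _) as [H'|H'].
    - destruct (constructive_indefinite_description _ H') as [a Ha]. simpl. exists a. tauto.
    - exfalso. apply H'. apply Hfex; auto. }
  assert (HpRn : dist pk pk <= Rn) by (rewrite dist_self; unfold Rn; lra).
  exists f. split; [|split; [|split; [|split]]].
  - destruct (Hf pk HpRn) as [a [_ [_ [Ha Hfa]]]]. rewrite Hfa, (Ha eq_refl). auto.
  - intros z w Hz Hw. unfold cball in Hz, Hw. fold pk in Hz, Hw.
    destruct (Hf z ltac:(unfold Rn; lra)) as [az [Haz1 [Haz2 [_ Haz3]]]].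
    destruct (Hf w ltac:(unfold Rn; lra)) as [aw [Haw1 [Haw2 [_ Haw3]]]].
    rewrite Haz3, Haw3. unfold io. rewrite iota_dist.
    pose proof (HN k Hk az Haz1 aw Haw1).
    pose proof (dist_diff _ (T (phi k) az) (T (phi k) aw) z w).
    apply Rabs_lt_inv' in H1. apply Rabs_le_inv' in H2. apply Rabs_def1; unfold eta in *; lra.
  - intros y0 Hy0. unfold cball in Hy0.
    destruct (iota_dense a0 delta Hps y0 eta Heta) as [a Ha]. fold io in Ha.
    assert (Hda : delta a0 a <= R0 - eps + eta).
    { pose proof (iota_dist a0 delta Hps a0 a). fold io in H1. rewrite <- H1.
      pose proof (dist_tri (Ymet a0 delta Hps) (io a0) y0 (io a)). simpl in *. lra. }
    destruct (pigeon l' (fun b n => dist (T (phi n) b) (T (phi n) a) < eta)) as [b [Hb1 Hb2]].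
    { intros N'. destruct (Hd a0 a eta Heta) as [Na HNa].
      set (n := Nat.max N' Na). exists n. split; [unfold n; lia|].
      pose proof (HNa n ltac:(unfold n; lia)). rewrite HT0 in H1. apply Rabs_lt_inv' in H1.
      destruct (Hl (phi n) (T (phi n) a) ltac:(unfold Rn, eta in *; lra)) as [b [Hb1 Hb2]].
      exists b. split; [right; right; right; auto|auto]. }
    assert (Hdb : delta b a <= eta).
    { apply le_epsilon. intros ep Hep. destruct (Hd b a ep Hep) as [Nb HNb].
      destruct (Hb2 Nb) as [n [Hn1 Hn2]]. pose proof (HNb n Hn1). apply Rabs_lt_inv' in H1. lra. }
    exists (T (phi k) b).
    assert (Hzb : dist pk (T (phi k) b) < R0 - eps + 3 * eta).
    { pose proof (HN k Hk a0 (or_introl eq_refl) b Hb1). rewrite HT0 in H1. fold pk in H1.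
      apply Rabs_lt_inv' in H1. pose proof Hps as [_ [Hs Ht]]. pose proof (Ht a0 a b).
      pose proof (Hs a b). lra. }
    split. unfold cball. fold pk. unfold eta in Hzb. lra.
    destruct (Hf (T (phi k) b) ltac:(unfold Rn, eta in *; lra)) as [az [Haz1 [Haz2 [_ Haz3]]]].
    rewrite Haz3.
    pose proof (HN k Hk az Haz1 b Hb1) as H1. apply Rabs_lt_inv' in H1.
    pose proof (dist_tri (Ymet a0 delta Hps) (io az) (io a) y0) as H2.
    pose proof (iota_dist a0 delta Hps az a) as E1. fold io in E1.
    pose proof Hps as [_ [_ Ht]]. pose proof (Ht az b a) as H3.
    pose proof (dist_sym (Ymet a0 delta Hps) y0 (io a)) as E2.
    simpl dist in *. unfold eta in *. lra.
  - assert (Hx : dist pk (xs (phi k)) <= Rn) by (pose proof (HB1 (phi k)); rewrite HT1 in H1; unfold Rn, pk; lra).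
    destruct (Hf _ Hx) as [az [Haz1 [Haz2 [_ Haz3]]]]. rewrite Haz3. unfold io. rewrite iota_dist.
    pose proof (HN k Hk az Haz1 a1 (or_intror (or_introl eq_refl))). rewrite HT1 in H1.
    apply Rabs_lt_inv' in H1. unfold eta in *. lra.
  - assert (Hy : dist pk (ys (phi k)) <= Rn) by (pose proof (HB2 (phi k)); rewrite HT2 in H1; unfold Rn, pk; lra).
    destruct (Hf _ Hy) as [az [Haz1 [Haz2 [_ Haz3]]]]. rewrite Haz3. unfold io. rewrite iota_dist.
    pose proof (HN k Hk az Haz1 a2 (or_intror (or_intror (or_introl eq_refl)))). rewrite HT2 in H1.
    apply Rabs_lt_inv' in H1. unfold eta in *. lra.
Qed.

Lemma Rj_pos (j : nat) : 0 < INR j + 3.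
Proof. pose proof (pos_INR j). lra. Qed.

Theorem GH_compact (Zs : nat -> MetricSpace) (ps xs ys : forall k, Zs k) (D : nat)
  (Hdb : forall k, doubling (Zs k) D)
  (Hx : forall k, dist (ps k) (xs k) <= 2) (Hy : forall k, dist (ps k) (ys k) <= 2) :
  exists phi, SI phi /\ exists Y : MetricSpace, complete Y /\ exists q x y : Y,
    forall R0 eps, 0 < R0 -> 0 < eps -> exists N, forall k, (N <= k)%nat ->
      exists f : Zs (phi k) -> Y, f (ps (phi k)) = q /\
        (forall a b, cball (ps (phi k)) R0 a -> cball (ps (phi k)) R0 b ->
           Rabs (dist (f a) (f b) - dist a b) < eps) /\
        (forall y0, cball q (R0 - eps) y0 ->
           exists a, cball (ps (phi k)) R0 a /\ dist (f a) y0 < eps) /\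
        dist (f (xs (phi k))) x < eps /\ dist (f (ys (phi k))) y < eps.
Proof.
  set (NL := fun k j m => proj1_sig (constructive_indefinite_description _
               (net_exists (Zs k) D (Hdb k) (ps k) (INR j + 3) (Rj_pos j) m))).
  assert (HNL : forall k j m, (length (NL k j m) <= D ^ m)%nat /\
    (forall c, In c (NL k j m) -> dist (ps k) c < INR j + 3) /\
    forall y, dist (ps k) y < INR j + 3 -> exists c, In c (NL k j m) /\ dist c y < 2 * ((INR j + 3) / 2 ^ m)).
  { intros k j m. unfold NL. destruct (constructive_indefinite_description _ _). auto. }
  set (T := fun k (a : (nat * nat) * nat) =>
     nth (snd a) (ps k :: xs k :: ys k :: NL k (fst (fst a)) (snd (fst a))) (ps k)).
  set (dec := fun x : nat => (Cantor.of_nat (fst (Cantor.of_nat x)), snd (Cantor.of_nat x))).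
  apply (GH_abstract Zs ps xs ys _ T ((0,0),0)%nat ((0,0),1)%nat ((0,0),2)%nat)
    with (e := fun c => (dec (fst (Cantor.of_nat c)), dec (snd (Cantor.of_nat c)))).
  - intros k; reflexivity.
  - intros k; reflexivity.
  - intros k; reflexivity.
  - intros [[j m] i]. exists (INR j + 3). intros k. unfold T. cbn [fst snd].
    destruct (nth_in_or_default i (ps k :: xs k :: ys k :: NL k j m) (ps k)) as [Hin|Heq].
    + destruct Hin as [<-|[<-|[<-|Hin]]].
      * rewrite dist_self. pose proof (pos_INR j). lra.
      * pose proof (Hx k). pose proof (pos_INR j). lra.
      * pose proof (Hy k). pose proof (pos_INR j). lra.
      * destruct (HNL k j m) as [_ [H _]]. left. apply H; auto.
    + rewrite Heq, dist_self. pose proof (pos_INR j). lra.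
  - intros R0 eps Heps.
    destruct (INR_unbounded R0) as [j Hj].
    destruct (pow2_small (2 * (INR j + 3)) eps Heps) as [m Hm].
    exists (map (fun i => ((j, m), i)) (seq 0 (3 + D ^ m))).
    intros k z Hz. destruct (HNL k j m) as [Hlen [_ Hcov]].
    destruct (Hcov z ltac:(lra)) as [c [Hc1 Hc2]].
    destruct (In_nth _ _ (ps k) Hc1) as [n [Hn1 Hn2]].
    exists ((j, m), (3 + n)%nat). split.
    + apply in_map. apply in_seq. lia.
    + unfold T. simpl. rewrite Hn2. replace (2 * (INR j + 3) / 2 ^ m) with (2 * ((INR j + 3) / 2 ^ m)) in Hm.
      lra. unfold Rdiv; ring.
  - intros a b. exists (Cantor.to_nat (Cantor.to_nat (Cantor.to_nat (fst a), snd a), Cantor.to_nat (Cantor.to_nat (fst b), snd b))).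
    rewrite Cantor.cancel_of_to. cbn [fst snd]. unfold dec. rewrite !Cantor.cancel_of_to. cbn [fst snd].
    rewrite !Cantor.cancel_of_to. destruct a, b; reflexivity.
Qed.

Lemma resc_dist (X : MetricSpace) r (x y : X) : 0 < r -> @dist (rescale r X) x y = dist x y / r.
Proof. intros Hr. simpl. unfold sdist. rewrite pos_part1_eq; auto. Qed.

Lemma doubling_rescale (X : MetricSpace) D r : 0 < r -> doubling X D -> doubling (rescale r X) D.
Proof.
  intros Hr Hdb x rho Hrho. destruct (Hdb x (rho * r)) as [cs [Hl Hc]]. nra.
  exists cs. split; auto. intros y Hy. unfold ball in Hy. rewrite resc_dist in Hy by auto.
  destruct (Hc y) as [c [Hc1 Hc2]].
  { unfold ball. apply Rmult_lt_reg_r with (/r). apply Rinv_0_lt_compat; auto.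
    unfold Rdiv in Hy. rewrite Rmult_assoc, Rinv_r by lra. lra. }
  exists c. split; auto. unfold ball in *. rewrite resc_dist by auto.
  unfold Rdiv. apply Rmult_lt_reg_r with r; auto. rewrite Rmult_assoc, Rinv_l by lra.
  replace (rho * / 2 * r) with (rho * r / 2) by (unfold Rdiv; ring). lra.
Qed.

Lemma chain_resc (X : MetricSpace) r (L : X -> X -> Prop) (P : X -> Prop) (x y : X) :
  @chain (rescale r X) L P x y -> @chain X L P x y.
Proof. induction 1. constructor; auto. eapply ch_cons; eauto. Qed.

Lemma chain_fin_bound_pos {X : MetricSpace} L P (x y : X) (g : X -> R) :
  (forall z, P z -> 0 < g z) -> chain L P x y -> exists lo hi, 0 < lo /\
    chain L (fun z => P z /\ lo <= g z <= hi) x y.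
Proof.
  intros Hg. induction 1.
  - exists (g x), (g x). split; auto. constructor. split; auto; lra.
  - destruct IHchain as [lo [hi [Hlo Hc]]].
    exists (Rmin lo (g x)), (Rmax hi (g x)). split. apply Rmin_glb_lt; auto.
    apply ch_cons with z.
    + split; auto. split; [apply Rmin_r|apply Rmax_r].
    + auto.
    + revert Hc. apply chain_mono; auto. intros u [Hu1 Hu2]. split; auto.
      pose proof (Rmin_l lo (g x)). pose proof (Rmax_l hi (g x)). lra.
Qed.

Lemma transfer (Z Y : MetricSpace) (f : Z -> Y) (p : Z) (q : Y) R0 eps
  (LY : Y -> Y -> Prop) (PY : Y -> Prop) :
  (forall y, cball q (R0 - eps) y -> exists a, cball p R0 a /\ dist (f a) y < eps) ->
  (forall z, PY z -> cball q (R0 - eps) z) -> (forall z, PY z -> LY z z) ->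
  forall z0 z1, chain LY PY z0 z1 -> forall w0 w1, cball p R0 w0 -> cball p R0 w1 ->
    dist (f w0) z0 < eps -> dist (f w1) z1 < eps ->
    chain (fun w w' => exists z z', PY z /\ PY z' /\ LY z z' /\ dist (f w) z < eps /\ dist (f w') z' < eps)
          (fun w => cball p R0 w /\ exists z, PY z /\ dist (f w) z < eps) w0 w1.
Proof.
  intros Hsurj HPc HLr. induction 1 as [x Hx|x z y Hx Hl Hc IH]; intros w0 w1 Hw0 Hw1 Hd0 Hd1.
  - apply ch_cons with w1.
    + split; auto. exists x; auto.
    + exists x, x. repeat split; auto.
    + constructor. split; auto. exists x; auto.
  - destruct (Hsurj z (HPc z (chain_Pl _ _ _ _ Hc))) as [w [Hw1' Hw2']].
    apply ch_cons with w.
    + split; auto. exists x; auto.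
    + exists x, z. repeat split; auto. eapply chain_Pl; eauto.
    + apply IH; auto.
Qed.

Lemma claim0 (D : nat) (C : MetricSpace -> Prop)
  (HC : forall X, C X -> complete X /\ doubling X D)
  (Hlim : forall (r : nat -> R) (Xs : nat -> MetricSpace) (ps : forall k, Xs k),
      (forall k, 0 < r k) -> (forall k, C (Xs k)) ->
      forall (Y : MetricSpace) (q : Y), complete Y ->
        pGH_converges (fun k => rescale (r k) (Xs k)) ps Y q ->
        connected_space Y /\ no_cut_points Y) :
  exists M, 1 <= M /\ forall X, C X -> forall (x y : X) s, 0 < s -> dist x y <= s ->
    chain (Lch X (s/2)) (fun z => dist x z < M * s) x y.
Proof.
  apply NNPP; intro Hn.
  assert (Hc : forall n : nat, exists W : {X : MetricSpace & prod (prod X X) R},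
     C (projT1 W) /\ 0 < snd (projT2 W) /\
     dist (fst (fst (projT2 W))) (snd (fst (projT2 W))) <= snd (projT2 W) /\
     ~ chain (Lch (projT1 W) (snd (projT2 W) / 2))
         (fun z => dist (fst (fst (projT2 W))) z < (INR n + 1) * snd (projT2 W))
         (fst (fst (projT2 W))) (snd (fst (projT2 W)))).
  { intro n. apply NNPP; intro Hn'. apply Hn. exists (INR n + 1). split. pose proof (pos_INR n); lra.
    intros X HX x y s Hs Hd. apply NNPP; intro Hch. apply Hn'.
    exists (existT _ X ((x, y), s)). simpl. auto. }
  set (W := fun n => proj1_sig (constructive_indefinite_description _ (Hc n))).
  assert (HW : forall n, C (projT1 (W n)) /\ 0 < snd (projT2 (W n)) /\
     dist (fst (fst (projT2 (W n)))) (snd (fst (projT2 (W n)))) <= snd (projT2 (W n)) /\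
     ~ chain (Lch (projT1 (W n)) (snd (projT2 (W n)) / 2))
         (fun z => dist (fst (fst (projT2 (W n)))) z < (INR n + 1) * snd (projT2 (W n)))
         (fst (fst (projT2 (W n)))) (snd (fst (projT2 (W n))))).
  { intros n. unfold W. destruct (constructive_indefinite_description _ _). auto. }
  set (Xs := fun n => projT1 (W n)).
  set (ss := fun n => snd (projT2 (W n))).
  set (xs := fun n => fst (fst (projT2 (W n))) : Xs n).
  set (ys := fun n => snd (fst (projT2 (W n))) : Xs n).
  assert (Hs : forall n, 0 < ss n) by (intros n; apply (HW n)).
  set (Zs := fun n => rescale (ss n) (Xs n)).
  assert (Hxy : forall n, @dist (Zs n) (xs n) (ys n) <= 1).
  { intros n. unfold Zs. rewrite resc_dist by auto. destruct (HW n) as [_ [_ [Hd _]]].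
    apply Rmult_le_reg_r with (ss n); auto. unfold Rdiv. rewrite Rmult_assoc, Rinv_l by (pose proof (Hs n); lra).
    fold (xs n) (ys n) (ss n) in Hd. rewrite Rmult_1_r, Rmult_1_l. exact Hd. }
  destruct (GH_compact Zs xs ys ys D) as [phi [Hphi [Y [HYc [q [xx [yy Hm]]]]]]].
  { intros k. apply doubling_rescale; auto. apply (HC _ (proj1 (HW k))). }
  { intros k. pose proof (Hxy k). lra. }
  { intros k. pose proof (Hxy k). lra. }
  assert (HpGH : pGH_converges (fun k => rescale (ss (phi k)) (Xs (phi k))) (fun k => xs (phi k)) Y q).
  { intros R0 eps HR He. destruct (Hm R0 eps HR He) as [N HN]. exists N. intros k Hk.
    destruct (HN k Hk) as [f [H1 [H2 [H3 _]]]]. exists f. auto. }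
  destruct (Hlim (fun k => ss (phi k)) (fun k => Xs (phi k)) (fun k => xs (phi k))) with (Y := Y) (q := q)
    as [Hconn _]; auto.
  { intros k. apply (HW (phi k)). }
  assert (Hch : chain (Lch Y (1/4)) (fun _ => True) q yy).
  { apply connected_chain; auto.
    - intros w _. exists (1/4). split; [lra|]. intros v Hv _. auto.
    - intros v _. exists (1/4). split; [lra|]. intros u Hu _. unfold Lch. rewrite dist_sym. auto. }
  destruct (chain_fin_bound _ _ _ _ (fun z => dist q z) Hch) as [lo [hi [_ Hch2]]].
  set (R0 := Rabs hi + 3).
  assert (HR0 : 0 < R0) by (unfold R0; pose proof (Rabs_pos hi); lra).
  destruct (Hm R0 (1/16) HR0 ltac:(lra)) as [N HN].
  destruct (INR_unbounded (R0 + 1)) as [j Hj].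
  set (k := Nat.max N j).
  destruct (HN k (Nat.le_max_l _ _)) as [f [Hf0 [Hdist [Hsurj [_ Hfy]]]]].
  assert (Hk : INR j <= INR (phi k)).
  { apply le_INR. pose proof (SI_ge phi Hphi k). unfold k in *. lia. }
  pose proof (transfer _ Y f (xs (phi k)) q R0 (1/16) (Lch Y (1/4)) (fun z => True /\ lo <= dist q z <= hi) Hsurj) as Htr.
  assert (Hc2 : chain (fun w w' => exists z z', (True /\ lo <= dist q z <= hi) /\ (True /\ lo <= dist q z' <= hi) /\
              Lch Y (1/4) z z' /\ dist (f w) z < 1/16 /\ dist (f w') z' < 1/16)
           (fun w => @cball (Zs (phi k)) (xs (phi k)) R0 w /\ exists z, (True /\ lo <= dist q z <= hi) /\ dist (f w) z < 1/16)
           (xs (phi k)) (ys (phi k))).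
  { apply Htr with (z0 := q) (z1 := yy); auto.
    - intros z [_ [_ Hz]]. unfold cball. pose proof (Rle_abs hi). unfold R0. lra.
    - intros z _. unfold Lch. rewrite dist_self. lra.
    - unfold cball. rewrite dist_self. lra.
    - unfold cball. pose proof (Hxy (phi k)). pose proof (Rabs_pos hi). apply Rle_trans with 1; [exact H|unfold R0; lra].
    - rewrite Hf0, dist_self. lra. }
  apply (proj2 (proj2 (proj2 (HW (phi k))))).
  apply (chain_resc _ (ss (phi k))).
  revert Hc2. apply chain_mono.
  - intros u v [Hu _] [Hv _] [z [z' [_ [_ [Hl [Hu' Hv']]]]]].
    pose proof (Hdist u v Hu Hv). apply Rabs_lt_inv' in H.
    unfold Lch in *. pose proof (dist_tri Y (f u) z (f v)). pose proof (dist_tri Y z z' (f v)).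
    rewrite (dist_sym Y (f v) z') in Hv'.
    assert (@dist (Zs (phi k)) u v < 1/2) by lra.
    unfold Zs in H2. rewrite resc_dist in H2 by auto.
    pose proof (Hs (phi k)). fold (ss (phi k)).
    apply Rmult_lt_reg_r with (/ ss (phi k)). apply Rinv_0_lt_compat; auto.
    unfold Rdiv in *. replace (ss (phi k) * / 2 * / ss (phi k)) with (/2) by (field; lra). rewrite Rmult_1_l in H2. exact H2.
  - intros u [Hu _]. unfold cball in Hu. unfold Zs in Hu. simpl in Hu. unfold sdist in Hu.
    rewrite pos_part1_eq in Hu by auto. fold (xs (phi k)) (ss (phi k)).
    pose proof (Hs (phi k)).
    assert (dist (xs (phi k)) u <= R0 * ss (phi k)).
    { apply Rmult_le_reg_r with (/ ss (phi k)). apply Rinv_0_lt_compat; auto.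
      rewrite Rmult_assoc, Rinv_r by lra. unfold Rdiv in Hu. lra. }
    apply Rle_lt_trans with (R0 * ss (phi k)); auto. apply Rmult_lt_compat_r; auto. lra.
Qed.

Lemma claim0_iter (C : MetricSpace -> Prop) (M : R) (HM1 : 1 <= M)
  (HM : forall X, C X -> forall (x y : X) s, 0 < s -> dist x y <= s ->
    chain (Lch X (s/2)) (fun z => dist x z < M * s) x y) :
  forall X, C X -> forall m (x y : X) s, 0 < s -> dist x y <= s ->
    chain (Lch X (s / 2 ^ (S m))) (fun z => dist x z < 2 * M * s) x y.
Proof.
  intros X HX m. induction m; intros x y s Hs Hd.
  - replace (s / 2 ^ 1) with (s / 2) by (simpl; field).
    generalize (HM X HX x y s Hs Hd). apply chain_mono; auto. intros u Hu. nra.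
  - pose proof (HM X HX x y s Hs Hd) as Hc.
    apply chain_refine with (L := Lch X (s/2)) (P := fun z => dist x z < M * s); auto.
    + intros u v Hu Hv Huv. unfold Lch in Huv.
      pose proof (IHm u v (s/2) ltac:(lra) ltac:(lra)) as Hc'.
      replace (s / 2 ^ S (S m)) with (s / 2 / 2 ^ S m) by (simpl; field; pose proof (pow2_pos m); lra).
      revert Hc'. apply chain_mono; auto. intros z Hz. pose proof (dist_tri X x u z). nra.
    + intros u Hu. nra.
Qed.

Lemma claim0_eps (C : MetricSpace -> Prop) (M : R) (HM1 : 1 <= M)
  (HM : forall X, C X -> forall (x y : X) s, 0 < s -> dist x y <= s ->
    chain (Lch X (s/2)) (fun z => dist x z < M * s) x y) :
  forall X, C X -> forall (x y : X) s, 0 < s -> dist x y <= s -> forall e, 0 < e ->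
    chain (Lch X e) (fun z => dist x z < 2 * M * s) x y.
Proof.
  intros X HX x y s Hs Hd e He. destruct (pow2_small s e He) as [m Hm].
  apply chain_e_mono with (s / 2 ^ S m).
  - apply Rle_trans with (s / 2 ^ m); [|lra]. simpl. unfold Rdiv. apply Rmult_le_compat_l; [lra|].
    apply Rinv_le_contravar. apply pow2_pos. pose proof (pow2_pos m). lra.
  - apply (claim0_iter C M HM1 HM X HX m x y s Hs Hd).
Qed.

Lemma alg1 (M lo eps t d b : R) : 1 <= M -> 0 < lo -> 0 < eps -> eps * (100 * M) <= lo ->
  lo - 2 * eps < t -> d < 3 * eps + b / (8 * M) -> b < t + 2 * eps -> d < t / (4 * M).
Proof.
  intros HM Hlo He Hel Ht Hd Hb.
  assert (H8 : b / (8 * M) < (t + 2 * eps) / (8 * M)).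
  { unfold Rdiv. apply Rmult_lt_compat_r; [apply Rinv_0_lt_compat; lra|lra]. }
  assert (Hk : 3 * eps + (t + 2 * eps) / (8 * M) <= t / (4 * M)).
  { assert (24 * M * eps + 2 * eps <= t) by nra.
    apply Rmult_le_reg_r with (8 * M). lra.
    rewrite Rmult_plus_distr_r. unfold Rdiv. rewrite !Rmult_assoc, Rinv_l by lra.
    replace (/ (4 * M) * (8 * M)) with 2 by (field; lra). nra. }
  lra.
Qed.

Lemma alg2 (c a d b : R) : 1 <= c -> 0 < a -> 0 <= d -> d < a / (2 * c) -> a <= d + b -> d < b / c.
Proof.
  intros Hc Ha Hd Hlt Hab.
  assert (2 * c * d < a).
  { apply Rmult_lt_reg_r with (/ (2 * c)). apply Rinv_0_lt_compat; lra.
    replace (2 * c * d * / (2 * c)) with d by (field; lra). exact Hlt. }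
  assert (c * d < b) by nra.
  apply Rmult_lt_reg_r with c. lra. unfold Rdiv. rewrite Rmult_assoc, Rinv_l by lra. lra.
Qed.

Record CE := { ceX : MetricSpace; ceP : ceX; ceXp : ceX; ceY : ceX; ceR : R }.

Theorem lemmaA3 (D : nat) (C : MetricSpace -> Prop)
  (HC : forall X, C X -> complete X /\ doubling X D)
  (Hlim : forall (r : nat -> R) (Xs : nat -> MetricSpace) (ps : forall k, Xs k),
      (forall k, 0 < r k) -> (forall k, C (Xs k)) ->
      forall (Y : MetricSpace) (q : Y), complete Y ->
        pGH_converges (fun k => rescale (r k) (Xs k)) ps Y q ->
        connected_space Y /\ no_cut_points Y) :
  exists lam : R, 1 <= lam /\ forall X, C X -> ALC X lam.
Proof.
  destruct (claim0 D C HC Hlim) as [M [HM1 HM]].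
  apply NNPP; intro Hn.
  assert (Hc : forall n : nat, exists w : CE, C (ceX w) /\ 0 < ceR w /\
     annulus (ceX w) (ceP w) (ceR w) (2 * ceR w) (ceXp w) /\
     annulus (ceX w) (ceP w) (ceR w) (2 * ceR w) (ceY w) /\
     ~ exists K, continuum (ceX w) K /\ K (ceXp w) /\ K (ceY w) /\
        forall z, K z -> annulus (ceX w) (ceP w) (ceR w / (INR n + 1)) (2 * (INR n + 1) * ceR w) z).
  { intro n. apply NNPP; intro Hn'. apply Hn. exists (INR n + 1). split. pose proof (pos_INR n); lra.
    intros X HX p r Hr Hdiam x y Hx Hy. apply NNPP; intro HK. apply Hn'.
    exists (Build_CE X p x y r). simpl. auto. }
  set (W := fun n => proj1_sig (constructive_indefinite_description _ (Hc n))).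
  assert (HW : forall n, C (ceX (W n)) /\ 0 < ceR (W n) /\
     annulus (ceX (W n)) (ceP (W n)) (ceR (W n)) (2 * ceR (W n)) (ceXp (W n)) /\
     annulus (ceX (W n)) (ceP (W n)) (ceR (W n)) (2 * ceR (W n)) (ceY (W n)) /\
     ~ exists K, continuum (ceX (W n)) K /\ K (ceXp (W n)) /\ K (ceY (W n)) /\
        forall z, K z -> annulus (ceX (W n)) (ceP (W n)) (ceR (W n) / (INR n + 1)) (2 * (INR n + 1) * ceR (W n)) z).
  { intros n. unfold W. destruct (constructive_indefinite_description _ _). auto. }
  set (Xs := fun n => ceX (W n)).
  set (rs := fun n => ceR (W n)).
  set (ps := fun n => ceP (W n) : Xs n).
  set (xs := fun n => ceXp (W n) : Xs n).
  set (ys := fun n => ceY (W n) : Xs n).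
  assert (Hr : forall n, 0 < rs n) by (intros n; apply (HW n)).
  set (Zs := fun n => rescale (rs n) (Xs n)).
  assert (HZd : forall n (u v : Xs n), @dist (Zs n) u v = dist u v / rs n).
  { intros n u v. unfold Zs. apply resc_dist. auto. }
  assert (Hxp : forall n, rs n <= dist (xs n) (ps n) <= 2 * rs n) by (intros n; apply (HW n)).
  assert (Hyp : forall n, rs n <= dist (ys n) (ps n) <= 2 * rs n) by (intros n; apply (HW n)).
  assert (HxZ : forall n, 1 <= @dist (Zs n) (ps n) (xs n) <= 2).
  { intros n. rewrite HZd. rewrite dist_sym. pose proof (Hxp n). pose proof (Hr n).
    split; [apply Rmult_le_reg_r with (rs n); auto; unfold Rdiv; rewrite Rmult_assoc, Rinv_l by lra; lra|].
    apply Rmult_le_reg_r with (rs n); auto; unfold Rdiv; rewrite Rmult_assoc, Rinv_l by lra; lra. }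
  assert (HyZ : forall n, 1 <= @dist (Zs n) (ps n) (ys n) <= 2).
  { intros n. rewrite HZd. rewrite dist_sym. pose proof (Hyp n). pose proof (Hr n).
    split; [apply Rmult_le_reg_r with (rs n); auto; unfold Rdiv; rewrite Rmult_assoc, Rinv_l by lra; lra|].
    apply Rmult_le_reg_r with (rs n); auto; unfold Rdiv; rewrite Rmult_assoc, Rinv_l by lra; lra. }
  destruct (GH_compact Zs ps xs ys D) as [phi [Hphi [Y [HYc [q [xx [yy Hm]]]]]]].
  { intros k. apply doubling_rescale; auto. apply (HC _ (proj1 (HW k))). }
  { intros k. apply (HxZ k). }
  { intros k. apply (HyZ k). }
  assert (HpGH : pGH_converges (fun k => rescale (rs (phi k)) (Xs (phi k))) (fun k => ps (phi k)) Y q).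
  { intros R0 eps HR He. destruct (Hm R0 eps HR He) as [N HN]. exists N. intros k Hk.
    destruct (HN k Hk) as [f [H1 [H2 [H3 _]]]]. exists f. auto. }
  destruct (Hlim (fun k => rs (phi k)) (fun k => Xs (phi k)) (fun k => ps (phi k))) with (Y := Y) (q := q)
    as [_ Hncp]; auto.
  { intros k. apply (HW (phi k)). }
  assert (Hconn : connected_set Y (fun z => z <> q)) by (apply NNPP; apply (Hncp q)).
  assert (Hfar : forall (tr : forall n, Xs n) (t : Y),
     (forall n, 1 <= @dist (Zs n) (ps n) (tr n) <= 2) ->
     (forall e, 0 < e -> exists N, forall k, (N <= k)%nat -> exists f : Zs (phi k) -> Y, f (ps (phi k)) = q /\
        (forall a b, @cball (Zs (phi k)) (ps (phi k)) 3 a -> @cball (Zs (phi k)) (ps (phi k)) 3 b ->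
           Rabs (dist (f a) (f b) - dist a b) < e) /\ dist (f (tr (phi k))) t < e) ->
     1 <= dist q t).
  { intros tr t Htr Hft. apply le_epsilon. intros e He.
    destruct (Hft (e/2)) as [N HN]. lra. destruct (HN N (le_n N)) as [f [Hf0 [Hfd Hft']]].
    assert (Hc0 : @cball (Zs (phi N)) (ps (phi N)) 3 (ps (phi N))) by (unfold cball; rewrite dist_self; lra).
    assert (Hc1 : @cball (Zs (phi N)) (ps (phi N)) 3 (tr (phi N))) by (unfold cball; pose proof (Htr (phi N)); lra).
    pose proof (Hfd _ _ Hc0 Hc1). rewrite Hf0 in H. apply Rabs_lt_inv' in H.
    pose proof (Htr (phi N)). pose proof (dist_tri Y q t (f (tr (phi N)))). pose proof (dist_sym Y t (f (tr (phi N)))). lra. }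
  assert (Hxx : 1 <= dist q xx).
  { apply (Hfar xs xx HxZ). intros e He. destruct (Hm 3 e ltac:(lra) He) as [N HN]. exists N.
    intros k Hk. destruct (HN k Hk) as [f [H1 [H2 [_ [H4 _]]]]]. exists f. auto. }
  assert (Hyy : 1 <= dist q yy).
  { apply (Hfar ys yy HyZ). intros e He. destruct (Hm 3 e ltac:(lra) He) as [N HN]. exists N.
    intros k Hk. destruct (HN k Hk) as [f [H1 [H2 [_ [_ H4]]]]]. exists f. auto. }
  assert (Hpos : forall z : Y, z <> q -> 0 < dist z q).
  { intros z Hz. pose proof (dist_nonneg Y z q). destruct H; auto. exfalso. apply Hz. apply dist_eq0. auto. }
  set (c := 8 * M).
  assert (Hc1 : 1 <= c) by (unfold c; lra).
  set (LY := fun z z' : Y => dist z z' < dist z q / c).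
  assert (Hch : chain LY (fun z => z <> q) xx yy).
  { apply connected_chain; auto.
    - intros w Hw. exists (dist w q / c). split. apply Rdiv_lt_0_compat; [apply Hpos; auto|lra].
      intros v Hv _. auto.
    - intros v Hv. exists (dist v q / (2 * c)). split. apply Rdiv_lt_0_compat; [apply Hpos; auto|lra].
      intros u Hu Hu'. unfold LY. rewrite dist_sym.
      apply alg2 with (dist v q); auto. apply dist_nonneg.
      pose proof (dist_tri Y v u q). auto.
    - intro H. rewrite H, dist_self in Hxx. lra.
    - intro H. rewrite H, dist_self in Hyy. lra. }
  destruct (chain_fin_bound_pos _ _ _ _ (fun z => dist z q) Hpos Hch) as [lo [hi [Hlo Hch2]]].
  assert (Hlohi : lo <= hi) by (pose proof (chain_Pl _ _ _ _ Hch2) as [_ H]; lra).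
  set (R0 := Rabs hi + 3).
  assert (HR0 : 0 < R0) by (unfold R0; pose proof (Rabs_pos hi); lra).
  set (eps := Rmin 1 (lo / (100 * M))).
  assert (Heps : 0 < eps) by (unfold eps; apply Rmin_glb_lt; [lra|apply Rdiv_lt_0_compat; lra]).
  assert (Heps1 : eps <= 1) by apply Rmin_l.
  assert (Heps2 : eps * (100 * M) <= lo).
  { pose proof (Rmin_r 1 (lo / (100 * M))). fold eps in H.
    apply Rmult_le_compat_r with (r := 100 * M) in H; [|lra].
    unfold Rdiv in H. rewrite Rmult_assoc, Rinv_l in H by lra. lra. }
  assert (Heps3 : eps <= lo / 100) by nra.
  destruct (Hm R0 eps HR0 Heps) as [N HN].
  destruct (INR_unbounded (4 / lo + R0)) as [j Hj].
  set (k := Nat.max N j).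
  destruct (HN k (Nat.le_max_l _ _)) as [f [Hf0 [Hdist [Hsurj [Hfx Hfy]]]]].
  assert (Hk : INR j <= INR (phi k)).
  { apply le_INR. pose proof (SI_ge phi Hphi k). unfold k in *. lia. }
  set (PY := fun z : Y => z <> q /\ lo <= dist z q <= hi).
  assert (Hc2 := transfer _ Y f (ps (phi k)) q R0 eps LY PY Hsurj).
  assert (Hc3 : chain (fun w w' => exists z z', PY z /\ PY z' /\ LY z z' /\ dist (f w) z < eps /\ dist (f w') z' < eps)
           (fun w => @cball (Zs (phi k)) (ps (phi k)) R0 w /\ exists z, PY z /\ dist (f w) z < eps)
           (xs (phi k)) (ys (phi k))).
  { apply Hc2 with (z0 := xx) (z1 := yy); auto.
    - intros z [_ [_ Hz]]. unfold cball. rewrite dist_sym. pose proof (Rle_abs hi). unfold R0. lra.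
    - intros z [Hz _]. unfold LY. rewrite dist_self. apply Rdiv_lt_0_compat; [apply Hpos; auto|lra].
    - unfold cball. pose proof (Rabs_pos hi). apply Rle_trans with 2; [apply HxZ|unfold R0; lra].
    - unfold cball. pose proof (Rabs_pos hi). apply Rle_trans with 2; [apply HyZ|unfold R0; lra]. }
  set (r := rs (phi k)).
  assert (Hrk : 0 < r) by apply Hr.
  assert (HA : chain (fun w w' : Xs (phi k) => dist w w' < dist w (ps (phi k)) / (4 * M))
                     (fun w => lo * r / 2 <= dist w (ps (phi k)) <= R0 * r) (xs (phi k)) (ys (phi k))).
  { apply (chain_resc _ r). revert Hc3. apply chain_mono.
    - intros u v [Hu [zu [Hzu1 Hzu2]]] [Hv _] [z [z' [Hz [Hz' [Hl [Hu' Hv']]]]]].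
      pose proof (Hdist u v Hu Hv) as Duv. apply Rabs_lt_inv' in Duv.
      assert (Hpu : @cball (Zs (phi k)) (ps (phi k)) R0 (ps (phi k))) by (unfold cball; rewrite dist_self; lra).
      pose proof (Hdist _ _ Hpu Hu) as Dpu. rewrite Hf0 in Dpu. apply Rabs_lt_inv' in Dpu.
      unfold LY in Hl. destruct Hz as [Hzq [Hz1 Hz2]].
      pose proof (dist_tri Y (f u) z (f v)). pose proof (dist_tri Y z z' (f v)).
      pose proof (dist_sym Y (f v) z').
      pose proof (dist_tri Y z (f u) q). pose proof (dist_sym Y z (f u)). pose proof (dist_sym Y q (f u)).
      pose proof (dist_tri Y q (f u) z). pose proof (dist_sym Y z q).
      assert (Huv : @dist (Zs (phi k)) u v < @dist (Zs (phi k)) (ps (phi k)) u / (4 * M)).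
      { unfold c in Hl. apply alg1 with lo eps (dist z q); auto; try lra. }
      rewrite !HZd in Huv. rewrite (dist_sym _ (ps (phi k)) u) in Huv. fold r in Huv.
      unfold Rdiv in *. apply Rmult_lt_reg_r with (/ r). apply Rinv_0_lt_compat; auto.
      eapply Rlt_le_trans; [exact Huv|right; ring].
    - intros u [Hu [z [[Hzq [Hz1 Hz2]] Hzu]]].
      assert (Hpu : @cball (Zs (phi k)) (ps (phi k)) R0 (ps (phi k))) by (unfold cball; rewrite dist_self; lra).
      pose proof (Hdist _ _ Hpu Hu) as Dpu. rewrite Hf0 in Dpu. apply Rabs_lt_inv' in Dpu.
      pose proof (dist_tri Y z (f u) q). pose proof (dist_sym Y z (f u)). pose proof (dist_sym Y q (f u)).
      unfold cball in Hu. rewrite HZd in Hu, Dpu. rewrite (dist_sym _ (ps (phi k)) u) in Hu, Dpu. fold r in Hu, Dpu.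
      assert (Ht : lo / 2 <= @dist (Xs (phi k)) u (ps (phi k)) / r <= R0) by lra.
      destruct Ht as [Ht1 Ht2]. split.
      + apply Rmult_le_reg_r with (/ r). apply Rinv_0_lt_compat; auto. unfold Rdiv in *.
        replace (lo * r * / 2 * / r) with (lo * / 2) by (field; lra). auto.
      + apply Rmult_le_reg_r with (/ r). apply Rinv_0_lt_compat; auto. unfold Rdiv in *.
        replace (R0 * r * / r) with R0 by (field; lra). auto. }
  set (K0 := annulus (Xs (phi k)) (ps (phi k)) (lo * r / 4) (2 * R0 * r)).
  assert (HK0c : compact_set (Xs (phi k)) K0).
  { apply closed_sub_compact with (K := cball (ps (phi k)) (2 * R0 * r)).
    - destruct (HC _ (proj1 (HW (phi k)))) as [Hcomp Hdb]. eapply cball_compact; eauto.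
    - apply annulus_closed.
    - intros z [_ Hz]. unfold cball. rewrite dist_sym. auto. }
  destruct (chain_continuum (Xs (phi k)) K0 (xs (phi k)) (ys (phi k)) HK0c (annulus_closed _ _ _ _)) as [Q [HQ [HQx [HQy HQK]]]].
  { intros e He. revert HA. apply chain_refine.
    - intros u v [Hu1 Hu2] _ Huv.
      assert (Hs : 0 < dist u (ps (phi k)) / (4 * M)) by (apply Rdiv_lt_0_compat; nra).
      pose proof (claim0_eps C M HM1 HM (Xs (phi k)) (proj1 (HW (phi k))) u v _ Hs ltac:(lra) e He) as Hcc.
      revert Hcc. apply chain_mono; auto. intros z Hz. unfold K0, annulus.
      replace (2 * M * (dist u (ps (phi k)) / (4 * M))) with (dist u (ps (phi k)) / 2) in Hz by (field; lra).
      pose proof (dist_tri _ u z (ps (phi k))). pose proof (dist_tri _ u (ps (phi k)) z). pose proof (dist_sym _ (ps (phi k)) z).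
      pose proof (dist_tri _ z u (ps (phi k))). pose proof (dist_sym _ z u). 
      pose proof (Rabs_pos hi). split; nra.
    - intros u [Hu1 Hu2]. unfold K0, annulus. pose proof (Rabs_pos hi). split; nra. }
  apply (proj2 (proj2 (proj2 (proj2 (HW (phi k)))))).
  exists Q. split; auto. split; auto. split; auto.
  intros z Hz. destruct (HQK z Hz) as [Hz1 Hz2]. fold (Xs (phi k)) (ps (phi k)) (rs (phi k)) r. split.
  - apply Rle_trans with (lo * r / 4); auto.
    assert (Hl : 4 / lo < INR (phi k) + 1) by lra.
    assert (1 / (INR (phi k) + 1) < lo / 4).
    { apply Rmult_lt_reg_r with (INR (phi k) + 1). pose proof (pos_INR (phi k)); lra.
      apply Rmult_lt_reg_r with (4 / lo). apply Rdiv_lt_0_compat; lra.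
      replace (1 / (INR (phi k) + 1) * (INR (phi k) + 1) * (4 / lo)) with (4 / lo) by (field; pose proof (pos_INR (phi k)); lra).
      replace (lo / 4 * (INR (phi k) + 1) * (4 / lo)) with (INR (phi k) + 1) by (field; lra). lra. }
    unfold Rdiv in *. nra.
  - apply Rle_trans with (2 * R0 * r); auto. assert (R0 <= INR (phi k) + 1) by (assert (0 < 4/lo) by (apply Rdiv_lt_0_compat; lra); lra). nra.
Qed.
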